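(* Let $(\mathbf{a}_1,\dots,\mathbf{a}_n)$ be symmetric second-order tensors on $\mathbb{R}^3$. Then: (1) the family is isotropic iff $\mathbf{a}_k'=0$ for all $1\le k\le n$; (2) it is transversely isotropic iff there exists $j$ with $\mathbf{a}_j'\neq0$, $\mathbf{a}_j\times\mathbf{a}_j^2=0$ and $\mathbf{a}_j\times\mathbf{a}_k=0$ for all $1\le k\le n$; (3) it is orthotropic iff $\operatorname{tr}(\mathbf{a}_k\times\mathbf{a}_l)=0$ for all $1\le k,l\le n$, and either there exists $j$ with $\mathbf{a}_j\times\mathbf{a}_j^2\neq0$ or there exists a pair $(i,j)$ with $\mathbf{a}_i\times\mathbf{a}_j\neq0$; (4) it is monoclinic iff there exists a pair $(i,j)$ such that $\boldsymbol{\omega}:=\operatorname{tr}(\mathbf{a}_i\times\mathbf{a}_j)\neq0$ and $(\mathbf{a}_k\boldsymbol{\omega})\times\boldsymbol{\omega}=0$ for all $1\le k\le n$.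
   Context: $SO(3)$ acts on tensors by $(g\star\mathbf{T})(x_1,\dots,x_m)=\mathbf{T}(g^{-1}x_1,\dots,g^{-1}x_m)$. Symmetry group of a family: intersection of $\{g: g\star\mathbf{a}_k=\mathbf{a}_k\}$; symmetry class: its conjugacy class in $SO(3)$. Isotropic $=[SO(3)]$, transversely isotropic $=[O(2)]$, orthotropic $=[\mathbb{D}_2]$, monoclinic $=[\mathbb{Z}_2]$ ($O(2)$: rotations about the $z$-axis together with the rotation by $\pi$ about the $x$-axis; $\mathbb{D}_2$: identity and rotations by $\pi$ about the coordinate axes; $\mathbb{Z}_2$: identity and a rotation by $\pi$). $\mathbf{a}'=\mathbf{a}-\frac13\operatorname{tr}(\mathbf{a})\mathbf{q}$ ($\mathbf{q}$ the identity tensor), $\mathbf{a}^2$ the matrix square, $\mathbf{a}_k\boldsymbol{\omega}$ matrix-vector product. For totally symmetric tensors $\mathbf{S}^1$ of order $p$ and $\mathbf{S}^2$ of order $q$ (vectors being order 1), $\mathbf{S}^1\times\mathbf{S}^2$ is the order $p+q-1$ totally symmetric tensor obtained by totally symmetrizing $\varepsilon_{i_1jk}S^1_{ji_2\cdots i_p}S^2_{ki_{p+1}\cdots i_{p+q-1}}$ ($\varepsilon$ Levi-Civita); for vectors it is the usual cross product. $\operatorname{tr}$ of a totally symmetric tensor is the contraction of two of its indices. *)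

(* Defs.v *)
From HB Require Import structures.
From mathcomp Require Import all_boot all_order all_algebra.
From mathcomp Require Import reals.
Set Implicit Arguments. Unset Strict Implicit. Unset Printing Implicit Defensive.
Import Order.TTheory GRing.Theory Num.Theory.
Local Open Scope ring_scope.

Section Defs.
Variable R : realType.

Definition mx3 (l : seq (seq R)) : 'M[R]_3 :=
  \matrix_(i < 3, j < 3) nth 0 (nth [::] l i) j.

Definition SO3 (g : 'M[R]_3) : Prop := g^T *m g = 1%:M /\ \det g = 1.

Definition Rz (c s : R) : 'M[R]_3 := mx3 [:: [:: c; -s; 0]; [:: s; c; 0]; [:: 0; 0; 1]].
Definition Rxpi : 'M[R]_3 := mx3 [:: [:: 1; 0; 0]; [:: 0; -1; 0]; [:: 0; 0; -1]].
Definition Rypi : 'M[R]_3 := mx3 [:: [:: -1; 0; 0]; [:: 0; 1; 0]; [:: 0; 0; -1]].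
Definition Rzpi : 'M[R]_3 := mx3 [:: [:: -1; 0; 0]; [:: 0; -1; 0]; [:: 0; 0; 1]].

Definition O2grp (m : 'M[R]_3) : Prop :=
  exists c s : R, c ^+ 2 + s ^+ 2 = 1 /\ (m = Rz c s \/ m = Rz c s *m Rxpi).
Definition D2grp (m : 'M[R]_3) : Prop :=
  m = 1%:M \/ m = Rxpi \/ m = Rypi \/ m = Rzpi.
Definition Z2grp (m : 'M[R]_3) : Prop := m = 1%:M \/ m = Rzpi.

(* action on a second-order tensor: (g*a)(x,y) = a(g^-1 x, g^-1 y), i.e. g a g^T *)
Definition act2 (g a : 'M[R]_3) : 'M[R]_3 := g *m a *m g^T.

Definition sym_group n (a : 'I_n -> 'M[R]_3) (g : 'M[R]_3) : Prop :=
  SO3 g /\ forall k, act2 g (a k) = a k.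

Definition conj_class (G H : 'M[R]_3 -> Prop) : Prop :=
  exists g, SO3 g /\ forall m, G m <-> H (g^T *m m *m g).

Definition isotropic n (a : 'I_n -> 'M[R]_3) := conj_class (sym_group a) SO3.
Definition transv_isotropic n (a : 'I_n -> 'M[R]_3) := conj_class (sym_group a) O2grp.
Definition orthotropic n (a : 'I_n -> 'M[R]_3) := conj_class (sym_group a) D2grp.
Definition monoclinic n (a : 'I_n -> 'M[R]_3) := conj_class (sym_group a) Z2grp.

Definition eps (i j k : 'I_3) : R :=
  ((((j : nat)%:Z - (i : nat)%:Z) * ((k : nat)%:Z - (i : nat)%:Z)
     * ((k : nat)%:Z - (j : nat)%:Z))%:~R) / 2.

Definition vec := 'I_3 -> R.
Definition tensor3 := 'I_3 -> 'I_3 -> 'I_3 -> R.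
Definition zero3 : tensor3 := fun _ _ _ => 0.
Definition zerov : vec := fun _ => 0.

Definition sym3 (T : tensor3) : tensor3 := fun i j k =>
  (T i j k + T i k j + T j i k + T j k i + T k i j + T k j i) / 6.

Definition cross22 (a b : 'M[R]_3) : tensor3 :=
  sym3 (fun i1 i2 i3 => \sum_(j < 3) \sum_(k < 3) eps i1 j k * a j i2 * b k i3).

Definition tr3 (T : tensor3) : vec := fun i => \sum_(j < 3) T i j j.

Definition crossv (u v : vec) : vec := fun i =>
  \sum_(j < 3) \sum_(k < 3) eps i j k * u j * v k.

Definition matvec (a : 'M[R]_3) (w : vec) : vec := fun i => \sum_(j < 3) a i j * w j.

Definition dev (a : 'M[R]_3) : 'M[R]_3 := a - (\tr a / 3) *: 1%:M.

End Defs.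

(* Main.v *)
Require Import Defs.
From HB Require Import structures.
From mathcomp Require Import all_boot all_order all_algebra.
From mathcomp Require Import reals.
From mathcomp Require Import polyrcf.
From mathcomp Require Import ring lra.
From Stdlib Require Import FunctionalExtensionality Classical.
Import Order.TTheory GRing.Theory Num.Theory.
Local Open Scope ring_scope.
Set Implicit Arguments. Unset Strict Implicit. Unset Printing Implicit Defensive.


Notation i0 := (@Ordinal 3 0 isT).
Notation i1 := (@Ordinal 3 1 isT).
Notation i2 := (@Ordinal 3 2 isT).

Section A.
Variable R : realType.
Implicit Types (a b c g h m : 'M[R]_3) (x y u v w : vec R).

Lemma sum3E (F : 'I_3 -> R) : \sum_(i < 3) F i = F i0 + F i1 + F i2.
Proof. by rewrite !big_ord_recr big_ord0 /= add0r; congr (_ + _ + _); congr F; apply: val_inj. Qed.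

Lemma ord3 (i : 'I_3) : [\/ i = i0, i = i1 | i = i2].
Proof. case: i => [[|[|[|//]]]] H; [apply: Or31|apply: Or32|apply: Or33]; exact: val_inj. Qed.

Lemma mx3_ext a b :
  a i0 i0 = b i0 i0 -> a i0 i1 = b i0 i1 -> a i0 i2 = b i0 i2 ->
  a i1 i0 = b i1 i0 -> a i1 i1 = b i1 i1 -> a i1 i2 = b i1 i2 ->
  a i2 i0 = b i2 i0 -> a i2 i1 = b i2 i1 -> a i2 i2 = b i2 i2 -> a = b.
Proof.
move=> *; apply/matrixP => i j.
by case: (ord3 i) => ->; case: (ord3 j) => ->.
Qed.

Lemma vec_ext x y : x i0 = y i0 -> x i1 = y i1 -> x i2 = y i2 -> x = y.
Proof. by move=> *; apply: functional_extensionality => i; case: (ord3 i) => ->. Qed.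

Lemma epsS0 x y : \sum_(j < 3) \sum_(k < 3) eps R i0 j k * x j * y k = x i1 * y i2 - x i2 * y i1.
Proof. rewrite !sum3E /eps /=; by field. Qed.
Lemma epsS1 x y : \sum_(j < 3) \sum_(k < 3) eps R i1 j k * x j * y k = x i2 * y i0 - x i0 * y i2.
Proof. rewrite !sum3E /eps /=; by field. Qed.
Lemma epsS2 x y : \sum_(j < 3) \sum_(k < 3) eps R i2 j k * x j * y k = x i0 * y i1 - x i1 * y i0.
Proof. rewrite !sum3E /eps /=; by field. Qed.

Lemma crossv0 x y : crossv x y i0 = x i1 * y i2 - x i2 * y i1. Proof. exact: epsS0. Qed.
Lemma crossv1 x y : crossv x y i1 = x i2 * y i0 - x i0 * y i2. Proof. exact: epsS1. Qed.
Lemma crossv2 x y : crossv x y i2 = x i0 * y i1 - x i1 * y i0. Proof. exact: epsS2. Qed.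

Definition det3 a := a i0 i0 * (a i1 i1 * a i2 i2 - a i1 i2 * a i2 i1)
  - a i0 i1 * (a i1 i0 * a i2 i2 - a i1 i2 * a i2 i0)
  + a i0 i2 * (a i1 i0 * a i2 i1 - a i1 i1 * a i2 i0).

Definition ent a (i j : nat) := a (inord i) (inord j).
Lemma entE a (i j : 'I_3) : a i j = ent a i j.
Proof. by rewrite /ent !inord_val. Qed.

Lemma det3E a : \det a = det3 a.
Proof.
rewrite (expand_det_row _ i0) sum3E /cofactor.
rewrite !(expand_det_row _ ord0) !big_ord_recr big_ord0 /= !add0r /cofactor.
rewrite !det_mx11 !mxE !big_ord0 /det3 !(entE a) /=. ring. Qed.


Ltac mxs := rewrite ?(mxE, sum3E) /=.

Lemma so3_tr g : SO3 g -> g *m g^T = 1%:M.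
Proof. by case=> H _; apply: mulmx1C. Qed.

Lemma so3T g : SO3 g -> SO3 g^T.
Proof. move=> Hg; split; last by rewrite det_tr; case: Hg. by rewrite trmxK so3_tr. Qed.

Lemma so3M g h : SO3 g -> SO3 h -> SO3 (g *m h).
Proof.
move=> [Hg Dg] [Hh Dh]; split; last by rewrite det_mulmx Dg Dh mulr1.
by rewrite trmx_mul mulmxA -(mulmxA h^T) Hg mulmx1 Hh.
Qed.

Lemma so3_1 : SO3 (1%:M : 'M[R]_3).
Proof. by split; [rewrite trmx1 mulmx1 | rewrite det1]. Qed.

Definition cofm g : 'M[R]_3 := mx3
  [:: [:: g i1 i1 * g i2 i2 - g i1 i2 * g i2 i1; g i1 i2 * g i2 i0 - g i1 i0 * g i2 i2; g i1 i0 * g i2 i1 - g i1 i1 * g i2 i0];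
      [:: g i2 i1 * g i0 i2 - g i2 i2 * g i0 i1; g i2 i2 * g i0 i0 - g i2 i0 * g i0 i2; g i2 i0 * g i0 i1 - g i2 i1 * g i0 i0];
      [:: g i0 i1 * g i1 i2 - g i0 i2 * g i1 i1; g i0 i2 * g i1 i0 - g i0 i0 * g i1 i2; g i0 i0 * g i1 i1 - g i0 i1 * g i1 i0]].

Lemma cofm_tr g : cofm g *m g^T = (det3 g)%:M.
Proof. apply: mx3_ext; rewrite /cofm /mx3; mxs; rewrite /det3; ring. Qed.

Lemma cofm_so3 g : SO3 g -> cofm g = g.
Proof.
move=> Hg; have [H D] := Hg.
by rewrite -[cofm g]mulmx1 -H mulmxA cofm_tr -det3E D mul1mx.
Qed.

Definition dotv x y := \sum_(i < 3) x i * y i.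

Ltac vs := rewrite /matvec /dotv /zerov ?(crossv0, crossv1, crossv2, mxE, sum3E) /=.

Lemma matvec_mul a b x : matvec (a *m b) x = matvec a (matvec b x).
Proof. apply: vec_ext; vs; ring. Qed.

Lemma matvec1 x : matvec 1%:M x = x.
Proof. apply: vec_ext; vs; ring. Qed.

Lemma cross_cof g x y : crossv (matvec g x) (matvec g y) = matvec (cofm g) (crossv x y).
Proof. apply: vec_ext; rewrite /cofm /mx3; vs; ring. Qed.

Lemma cross_rot g x y : SO3 g -> crossv (matvec g x) (matvec g y) = matvec g (crossv x y).
Proof. by move=> Hg; rewrite cross_cof cofm_so3. Qed.

Lemma dot_tr g x y : dotv x (matvec g y) = dotv (matvec g^T x) y.
Proof. vs; ring. Qed.

Lemma matvec_inj g x : SO3 g -> matvec g x = zerov R -> x = zerov R.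
Proof.
move=> Hg H; have [Hg' _] := Hg.
rewrite -[x]matvec1 -Hg' matvec_mul H.
by apply: vec_ext; vs; ring.
Qed.

Lemma C0 a b q r : \sum_(j < 3) \sum_(k < 3) eps R i0 j k * a j q * b k r = a i1 q * b i2 r - a i2 q * b i1 r.
Proof. exact: (epsS0 (fun j => a j q) (fun k => b k r)). Qed.
Lemma C1 a b q r : \sum_(j < 3) \sum_(k < 3) eps R i1 j k * a j q * b k r = a i2 q * b i0 r - a i0 q * b i2 r.
Proof. exact: (epsS1 (fun j => a j q) (fun k => b k r)). Qed.
Lemma C2 a b q r : \sum_(j < 3) \sum_(k < 3) eps R i2 j k * a j q * b k r = a i0 q * b i1 r - a i1 q * b i0 r.
Proof. exact: (epsS2 (fun j => a j q) (fun k => b k r)). Qed.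

Ltac cs := rewrite /cross22 /sym3 /= ?(C0, C1, C2).

Definition F a b x := dotv x (crossv (matvec a x) (matvec b x)).

Lemma F_expand a b x : F a b x =
  \sum_(p < 3) \sum_(q < 3) \sum_(r < 3) cross22 a b p q r * x p * x q * x r.
Proof. rewrite /F; vs; cs; by field. Qed.

Definition v3 (x0 x1 x2 : R) : vec R := fun i => nth 0 [:: x0; x1; x2] i.

Lemma cross22_sym1 a b p q r : cross22 a b p q r = cross22 a b q p r.
Proof. rewrite /cross22 /sym3; ring. Qed.
Lemma cross22_sym2 a b p q r : cross22 a b p q r = cross22 a b p r q.
Proof. rewrite /cross22 /sym3; ring. Qed.

Lemma six0 (c d : R) : c * 6 = d -> d = 0 -> c = 0.
Proof. move=> <- /eqP; rewrite mulf_eq0 => /orP[/eqP //|]. by rewrite pnatr_eq0. Qed.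

Lemma F_cross22 a b : (forall x, F a b x = 0) -> cross22 a b = zero3 R.
Proof.
move=> Fz.
have h000 : cross22 a b i0 i0 i0 = 0.
  by rewrite -(Fz (v3 1 0 0)) /F /v3; vs; cs; field.
have h111 : cross22 a b i1 i1 i1 = 0.
  by rewrite -(Fz (v3 0 1 0)) /F /v3; vs; cs; field.
have h222 : cross22 a b i2 i2 i2 = 0.
  by rewrite -(Fz (v3 0 0 1)) /F /v3; vs; cs; field.
have h001 : cross22 a b i0 i0 i1 = 0.
  apply: (six0 (d := F a b (v3 1 1 0) - F a b (v3 1 (-1) 0) - 2 * F a b (v3 0 1 0))); last by rewrite !Fz; ring.
  by rewrite /F /v3; vs; cs; field.
have h011 : cross22 a b i0 i1 i1 = 0.
  apply: (six0 (d := F a b (v3 1 1 0) + F a b (v3 1 (-1) 0) - 2 * F a b (v3 1 0 0))); last by rewrite !Fz; ring.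
  by rewrite /F /v3; vs; cs; field.
have h002 : cross22 a b i0 i0 i2 = 0.
  apply: (six0 (d := F a b (v3 1 0 1) - F a b (v3 1 0 (-1)) - 2 * F a b (v3 0 0 1))); last by rewrite !Fz; ring.
  by rewrite /F /v3; vs; cs; field.
have h022 : cross22 a b i0 i2 i2 = 0.
  apply: (six0 (d := F a b (v3 1 0 1) + F a b (v3 1 0 (-1)) - 2 * F a b (v3 1 0 0))); last by rewrite !Fz; ring.
  by rewrite /F /v3; vs; cs; field.
have h112 : cross22 a b i1 i1 i2 = 0.
  apply: (six0 (d := F a b (v3 0 1 1) - F a b (v3 0 1 (-1)) - 2 * F a b (v3 0 0 1))); last by rewrite !Fz; ring.
  by rewrite /F /v3; vs; cs; field.
have h122 : cross22 a b i1 i2 i2 = 0.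
  apply: (six0 (d := F a b (v3 0 1 1) + F a b (v3 0 1 (-1)) - 2 * F a b (v3 0 1 0))); last by rewrite !Fz; ring.
  by rewrite /F /v3; vs; cs; field.
have h012 : cross22 a b i0 i1 i2 = 0.
  apply: (six0 (d := F a b (v3 1 1 1) - F a b (v3 1 1 0) - F a b (v3 1 0 1) - F a b (v3 0 1 1)
     + F a b (v3 1 0 0) + F a b (v3 0 1 0) + F a b (v3 0 0 1))); last by rewrite !Fz; ring.
  by rewrite /F /v3; vs; cs; field.
apply: functional_extensionality => p; apply: functional_extensionality => q;
apply: functional_extensionality => r; rewrite /zero3.
case: (ord3 p) => ->; case: (ord3 q) => ->; case: (ord3 r) => ->;
  first [ assumption
        | rewrite cross22_sym1; assumption
        | rewrite cross22_sym2; assumption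
        | rewrite cross22_sym1 cross22_sym2; assumption
        | rewrite cross22_sym2 cross22_sym1; assumption
        | rewrite cross22_sym1 cross22_sym2 cross22_sym1; assumption ].
Qed.

Lemma cross22_F a b : cross22 a b = zero3 R -> forall x, F a b x = 0.
Proof.
move=> H x; rewrite F_expand H /zero3.
by rewrite big1 // => p _; rewrite big1 // => q _; rewrite big1 // => r _; rewrite !mul0r.
Qed.

Lemma F_rot g a b x : SO3 g ->
  F (g *m a *m g^T) (g *m b *m g^T) x = F a b (matvec g^T x).
Proof. by move=> Hg; rewrite /F !matvec_mul cross_rot // dot_tr. Qed.

Lemma cross22_rot g a b : SO3 g ->
  (cross22 (g *m a *m g^T) (g *m b *m g^T) = zero3 R <-> cross22 a b = zero3 R).
Proof.
move=> Hg; split => H.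
  apply: F_cross22 => y; have := cross22_F H (matvec g y).
  by rewrite F_rot // -matvec_mul; case: Hg => -> _; rewrite matvec1.
by apply: F_cross22 => y; rewrite F_rot //; apply: cross22_F.
Qed.

Lemma conjK g a : SO3 g -> g^T *m (g *m a *m g^T) *m g = a.
Proof.
move=> Hg; have [H _] := Hg.
by rewrite !mulmxA H mul1mx -mulmxA H mulmx1.
Qed.

Lemma conjK' g a : SO3 g -> g *m (g^T *m a *m g) *m g^T = a.
Proof. by move=> Hg; have := conjK a (so3T Hg); rewrite trmxK. Qed.

Lemma conj_inj g a b : SO3 g -> g *m a *m g^T = g *m b *m g^T -> a = b.
Proof. by move=> Hg H; rewrite -(conjK a Hg) H conjK. Qed.

Lemma conjM g a b : SO3 g -> (g *m a *m g^T) *m (g *m b *m g^T) = g *m (a *m b) *m g^T.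
Proof.
move=> Hg; have [H _] := Hg.
by rewrite !mulmxA -(mulmxA _ g^T) H mulmx1.
Qed.

Lemma conjT g a : (g *m a *m g^T)^T = g *m a^T *m g^T.
Proof. by rewrite !trmx_mul trmxK mulmxA. Qed.

Lemma conj_lin g a b (k : R) : g *m (a - k *: b) *m g^T = g *m a *m g^T - k *: (g *m b *m g^T).
Proof. by rewrite mulmxBr mulmxBl -!scalemxAr -scalemxAl. Qed.

Lemma dev_rot g a : SO3 g -> dev (g *m a *m g^T) = g *m dev a *m g^T.
Proof.
move=> Hg; rewrite /dev conj_lin. rewrite mulmx1 (so3_tr Hg); congr (_ - (_ / 3) *: _).
by rewrite mxtrace_mulC mulmxA; case: Hg => -> _; rewrite mul1mx.
Qed.

Lemma dev_rot0 g a : SO3 g -> (dev (g *m a *m g^T) = 0 <-> dev a = 0).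
Proof.
move=> Hg; rewrite dev_rot //; split => H.
  by apply: (conj_inj Hg); rewrite H mulmx0 mul0mx.
by rewrite H mulmx0 mul0mx.
Qed.

Definition skew w : 'M[R]_3 := mx3
  [:: [:: 0; - w i2; w i1]; [:: w i2; 0; - w i0]; [:: - w i1; w i0; 0]].

Lemma symE a : a^T = a -> [/\ a i1 i0 = a i0 i1, a i2 i0 = a i0 i2 & a i2 i1 = a i1 i2].
Proof.
move=> H; split; by rewrite -{1}H mxE.
Qed.

Lemma comm_skew a b : a^T = a -> b^T = b ->
  a *m b - b *m a = skew (fun i => -3 * tr3 (cross22 a b) i).
Proof.
move=> /symE [a1 a2 a3] /symE [b1 b2 b3].
apply: mx3_ext; rewrite /skew /mx3 /tr3; mxs; cs; rewrite ?a1 ?a2 ?a3 ?b1 ?b2 ?b3; by field.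
Qed.

Lemma skew_cof g w : g *m skew w *m g^T = skew (matvec (cofm g) w).
Proof. apply: mx3_ext; rewrite /skew /cofm /mx3 /matvec; mxs; ring. Qed.

Lemma skew_inj w w' : skew w = skew w' -> w = w'.
Proof.
move/matrixP => H; apply: vec_ext.
- by have := H i2 i1; rewrite !mxE.
- by have := H i0 i2; rewrite !mxE.
- by have := H i1 i0; rewrite !mxE.
Qed.

Lemma skew0 : skew (zerov R) = 0.
Proof. apply: mx3_ext; rewrite /skew /mx3 /zerov; mxs; ring. Qed.

Lemma scale_vec_inj (k : R) x y : k != 0 -> (fun i => k * x i) = (fun i => k * y i) -> x = y.
Proof.
move=> k0 H; apply: functional_extensionality => i.
have := congr1 (fun f => f i) H => /= /(congr1 (fun t => k^-1 * t)).
by rewrite !mulrA mulVf // !mul1r.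
Qed.

Lemma tr3_rot g a b : SO3 g -> a^T = a -> b^T = b ->
  tr3 (cross22 (g *m a *m g^T) (g *m b *m g^T)) = matvec g (tr3 (cross22 a b)).
Proof.
move=> Hg sa sb.
have sa' : (g *m a *m g^T)^T = g *m a *m g^T by rewrite conjT sa.
have sb' : (g *m b *m g^T)^T = g *m b *m g^T by rewrite conjT sb.
have := comm_skew sa' sb'.
rewrite !conjM // -mulmxBl -mulmxBr comm_skew // skew_cof cofm_so3 //.
move/skew_inj => H.
apply: (@scale_vec_inj (-3)); first by rewrite oppr_eq0 pnatr_eq0.
rewrite -H; apply: functional_extensionality => i; vs.
case: (ord3 i) => ->; vs; ring.
Qed.
End A.

Section B.
Variable R : realType.
Implicit Types (a b c g h m : 'M[R]_3) (x y u v w : vec R).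

Ltac mxs := rewrite ?(mxE, sum3E) /=.
Ltac vs := rewrite /matvec /dotv /zerov ?(crossv0, crossv1, crossv2, mxE, sum3E) /=.

Definition prot (p q r z : R) : 'M[R]_3 :=
  mx3 [:: [:: - q; - p * z; p * r]; [:: p; - q * z; q * r]; [:: 0; r; z]].

Lemma lc2 (E F X1 X2 k1 k2 : R) : X1 = 0 -> X2 = 0 -> E - F = k1 * X1 + k2 * X2 -> E = F.
Proof. move=> -> ->; rewrite !mulr0 addr0 => /eqP; rewrite subr_eq0 => /eqP. done. Qed.

Lemma prot_so3 p q r z : p ^+ 2 + q ^+ 2 = 1 -> r ^+ 2 + z ^+ 2 = 1 -> SO3 (prot p q r z).
Proof.
move=> H1 H2.
have X1 : p ^+ 2 + q ^+ 2 - 1 = 0 by rewrite H1 subrr.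
have X2 : r ^+ 2 + z ^+ 2 - 1 = 0 by rewrite H2 subrr.
Local Ltac lc k1 k2 X1 X2 := apply: (lc2 (k1:=k1) (k2:=k2) X1 X2); ring.
split.
  apply: mx3_ext; rewrite /prot /mx3; mxs;
  [lc (1:R) (0:R) X1 X2 | ring | ring | ring | lc (z^+2) (1:R) X1 X2 | lc (-z*r) (0:R) X1 X2
  | ring | lc (-z*r) (0:R) X1 X2 | lc (r^+2) (1:R) X1 X2].
rewrite det3E /det3 /prot /mx3; mxs; lc (r^+2+z^+2) (1:R) X1 X2.
Qed.


Lemma rot_to_e3 u : dotv u u = 1 ->
  exists g, SO3 g /\ matvec g (v3 0 0 1) = u.
Proof.
move=> Hu.
have Hs : (u i0 ^+ 2 + u i1 ^+ 2) + u i2 ^+ 2 = 1 by rewrite -Hu; vs; ring.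
have col2 : forall p q r z, matvec (prot p q r z) (v3 0 0 1) = v3 (p * r) (q * r) z.
  by move=> p q r z; apply: vec_ext; rewrite /prot /mx3 /v3; vs; ring.
have [s0|s0] := eqVneq (u i0 ^+ 2 + u i1 ^+ 2) 0.
  have u0 : u i0 = 0 by nra.
  have u1 : u i1 = 0 by nra.
  exists (prot 1 0 0 (u i2)); split.
    by apply: prot_so3; [ring | rewrite -Hs s0; ring].
  by rewrite col2; apply: vec_ext; rewrite /v3 /= ?u0 ?u1; ring.
have sp : 0 < u i0 ^+ 2 + u i1 ^+ 2.
  by rewrite lt_def s0 /=; apply: addr_ge0; apply: sqr_ge0.
set r := Num.sqrt (u i0 ^+ 2 + u i1 ^+ 2).
have r0 : 0 < r by rewrite sqrtr_gt0.
have rn : r != 0 by apply: lt0r_neq0.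
have r2 : r ^+ 2 = u i0 ^+ 2 + u i1 ^+ 2 by rewrite sqr_sqrtr // ltW.
exists (prot (u i0 / r) (u i1 / r) r (u i2)); split.
  apply: prot_so3; last by rewrite r2.
  by rewrite !expr_div_n -mulrDl -r2 divff // expf_neq0.
by rewrite col2; apply: vec_ext; rewrite /v3 /= ?divfK.
Qed.

Lemma matvec_scale a (k : R) x : matvec a (fun i => k * x i) = fun i => k * matvec a x i.
Proof. apply: functional_extensionality => i; vs; ring. Qed.

Lemma eig a : a^T = a -> exists (l : R) u, dotv u u = 1 /\ matvec a u = (fun i => l * u i).
Proof.
move=> sa; have [a1 a2 a3] := symE sa.
have [x rx] : {x | root (char_poly a) x} by apply: odd_poly_root; rewrite size_char_poly.
have /eigenvalueP [v Hv v0] : eigenvalue a x by rewrite eigenvalue_root_char.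
set s := v 0 i0 ^+ 2 + v 0 i1 ^+ 2 + v 0 i2 ^+ 2.
have sn : s != 0.
  apply/eqP => s0; rewrite /s in s0; move/eqP: v0; apply.
  have e0 : v 0 i0 = 0 by nra.
  have e1 : v 0 i1 = 0 by nra.
  have e2 : v 0 i2 = 0 by nra.
  apply/rowP => i; rewrite mxE; case: (ord3 i) => ->; by [].
have sp : 0 < s.
  rewrite lt_def sn /=; apply: addr_ge0; [apply: addr_ge0|]; apply: sqr_ge0.
set r := Num.sqrt s.
have r0 : 0 < r by rewrite sqrtr_gt0.
have rn : r != 0 by apply: lt0r_neq0.
have r2 : r ^+ 2 = s by rewrite sqr_sqrtr // ltW.
exists x, (fun i => v 0 i / r); split.
  rewrite /dotv sum3E.
  have -> : v 0 i0 / r * (v 0 i0 / r) + v 0 i1 / r * (v 0 i1 / r) + v 0 i2 / r * (v 0 i2 / r)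
     = s / r ^+ 2 by rewrite /s; field.
  by rewrite r2 divff.
have H : forall i, v 0 i0 * a i0 i + v 0 i1 * a i1 i + v 0 i2 * a i2 i = x * v 0 i.
  move=> i; have := congr1 (fun M : 'rV[R]_3 => M 0 i) Hv; rewrite !mxE sum3E => ->; done.
apply: functional_extensionality => i; vs.
rewrite (_ : x * (v 0 i / r) = (x * v 0 i) / r); last by field.
rewrite -H; case: (ord3 i) => ->; rewrite ?a1 ?a2 ?a3; by field.
Qed.

Definition diag3 (x y z : R) : 'M[R]_3 := mx3 [:: [:: x; 0; 0]; [:: 0; y; 0]; [:: 0; 0; z]].

Lemma plane_angle (p q r : R) : exists c s : R, c ^+ 2 + s ^+ 2 = 1 /\
  q * (c ^+ 2 - s ^+ 2) + c * s * (r - p) = 0.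
Proof.
have [q0|q0] := eqVneq q 0.
  by exists 1, 0; rewrite q0; split; ring.
set d := ((p - r) / 2) ^+ 2 + q ^+ 2.
have d0 : 0 <= d by rewrite /d addr_ge0 // sqr_ge0.
set l := (p + r) / 2 + Num.sqrt d.
have hl : (l - p) * (l - r) = q ^+ 2.
  have E : (l - p) * (l - r) = Num.sqrt d ^+ 2 - ((p - r) / 2) ^+ 2 by rewrite /l; field.
  by rewrite E sqr_sqrtr // /d addrC addKr.
set L := l - p.
set n2 := q ^+ 2 + L ^+ 2.
have q2 : 0 < q ^+ 2 by rewrite lt_def sqr_ge0 andbT expf_neq0.
have n2p : 0 < n2 by rewrite /n2; have := sqr_ge0 L; lra.
set n := Num.sqrt n2.
have n0 : 0 < n by rewrite sqrtr_gt0.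
have nn : n != 0 by apply: lt0r_neq0.
have nsq : n ^+ 2 = n2 by rewrite sqr_sqrtr // ltW.
exists (q / n), (L / n); split.
  by rewrite !expr_div_n -mulrDl nsq divff // lt0r_neq0.
have E : q * ((q / n) ^+ 2 - (L / n) ^+ 2) + q / n * (L / n) * (r - p)
   = q * (q ^+ 2 - L * (l - r)) / n ^+ 2 by rewrite /L; field.
by rewrite E hl subrr mulr0 mul0r.
Qed.

Lemma plane b : b^T = b -> b i0 i2 = 0 -> b i1 i2 = 0 ->
  exists c s : R, c ^+ 2 + s ^+ 2 = 1 /\ exists x y z : R, (Rz c s)^T *m b *m Rz c s = diag3 x y z.
Proof.
move=> sb h02 h12; have [b1 b2 b3] := symE sb.
have [c [s [cs K]]] := plane_angle (b i0 i0) (b i0 i1) (b i1 i1).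
exists c, s; split => //.
exists (((Rz c s)^T *m b *m Rz c s) i0 i0), (((Rz c s)^T *m b *m Rz c s) i1 i1), (b i2 i2).
apply: mx3_ext; rewrite /diag3 /Rz /mx3; mxs; rewrite ?b1 ?b2 ?b3 ?h02 ?h12 //; try ring;
  apply: (eq_trans _ K); ring.
Qed.

Lemma Rz_so3 (c s : R) : c ^+ 2 + s ^+ 2 = 1 -> SO3 (Rz c s).
Proof.
move=> H; have -> : Rz c s = prot s (- c) 0 1 by apply: mx3_ext; rewrite /Rz /prot /mx3; mxs; ring.
by apply: prot_so3; [rewrite -H; ring | ring].
Qed.

Lemma conjT' g a : (g^T *m a *m g)^T = g^T *m a^T *m g.
Proof. by rewrite !trmx_mul trmxK mulmxA. Qed.

Lemma eig_block a g (l : R) : SO3 g -> a^T = a ->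
  matvec a (matvec g (v3 0 0 1)) = (fun i => l * matvec g (v3 0 0 1) i) ->
  let b := g^T *m a *m g in [/\ b^T = b, b i0 i2 = 0, b i1 i2 = 0 & b i2 i2 = l].
Proof.
move=> Sg sa Ha b.
have Hbe : matvec b (v3 0 0 1) = (fun i => l * v3 0 0 1 i).
  rewrite /b !matvec_mul Ha matvec_scale -matvec_mul.
  by case: Sg => -> _; rewrite matvec1.
have E := fun i => congr1 (fun f => f i) Hbe.
split.
- by rewrite /b conjT' sa.
- have := E i0; rewrite /matvec sum3E /v3 /= => H.
  by transitivity (b i0 i0 * 0 + b i0 i1 * 0 + b i0 i2 * 1); [ring | rewrite H; ring].
- have := E i1; rewrite /matvec sum3E /v3 /= => H.
  by transitivity (b i1 i0 * 0 + b i1 i1 * 0 + b i1 i2 * 1); [ring | rewrite H; ring].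
- have := E i2; rewrite /matvec sum3E /v3 /= => H.
  by transitivity (b i2 i0 * 0 + b i2 i1 * 0 + b i2 i2 * 1); [ring | rewrite H; ring].
Qed.

Lemma diagonalize a : a^T = a -> exists g (x y z : R), SO3 g /\ g^T *m a *m g = diag3 x y z.
Proof.
move=> sa; have [l [u [Hu Hau]]] := eig sa.
have [g1 [S1 H1]] := rot_to_e3 Hu.
have Hl : matvec a (matvec g1 (v3 0 0 1)) = (fun i => l * matvec g1 (v3 0 0 1) i) by rewrite H1.
have [sb h02 h12 _] := eig_block S1 sa Hl.
have [c [s [cs [x [y [z Hd]]]]]] := plane sb h02 h12.
exists (g1 *m Rz c s), x, y, z; split; first by apply: so3M => //; apply: Rz_so3.
by rewrite trmx_mul -Hd !mulmxA.
Qed.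
End B.

Section C.
Variable R : realType.
Implicit Types (g m : 'M[R]_3) (x y u v w : vec R).

Ltac mxs := rewrite ?(mxE, sum3E) /=.
Ltac vs := rewrite /matvec /dotv /zerov ?(crossv0, crossv1, crossv2, mxE, sum3E) /=.

Section Fam.
Variables (n : nat).

Definition Cond1 (a : 'I_n -> 'M[R]_3) := forall k, dev (a k) = 0.
Definition Cond2 (a : 'I_n -> 'M[R]_3) :=
  exists j, dev (a j) <> 0 /\ cross22 (a j) (a j *m a j) = zero3 R
                  /\ (forall k, cross22 (a j) (a k) = zero3 R).
Definition Cond3 (a : 'I_n -> 'M[R]_3) :=
  (forall k l, tr3 (cross22 (a k) (a l)) = zerov R)
        /\ ((exists j, cross22 (a j) (a j *m a j) <> zero3 R)
            \/ (exists i j, cross22 (a i) (a j) <> zero3 R)).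
Definition Cond4 (a : 'I_n -> 'M[R]_3) :=
  exists i j, let w := tr3 (cross22 (a i) (a j)) in
          w <> zerov R /\ (forall k, crossv (matvec (a k) w) w = zerov R).

Definition conjf g (b : 'I_n -> 'M[R]_3) := fun k => g *m b k *m g^T.

Lemma conj_act g m (a : 'M[R]_3) : SO3 g ->
  act2 (g^T *m m *m g) (g^T *m a *m g) = g^T *m act2 m a *m g.
Proof.
move=> Sg; rewrite /act2 !trmx_mul trmxK.
rewrite !mulmxA -(mulmxA _ g g^T) (so3_tr Sg) mulmx1.
by rewrite -(mulmxA _ g g^T) (so3_tr Sg) mulmx1.
Qed.

Lemma symg_conj g (a : 'I_n -> 'M[R]_3) m : SO3 g ->
  (sym_group a m <-> sym_group (conjf g^T a) (g^T *m m *m g)).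
Proof.
move=> Sg; rewrite /sym_group /conjf trmxK; split.
  move=> [Sm Hm]; split; first by apply: so3M => //; apply: so3M => //; apply: so3T.
  by move=> k; rewrite conj_act // Hm.
move=> [Sm Hm]; split.
  have := so3M (so3M Sg Sm) (so3T Sg).
  by rewrite !mulmxA (so3_tr Sg) mul1mx -mulmxA (so3_tr Sg) mulmx1.
move=> k; have := Hm k; rewrite conj_act // => H.
apply: (conj_inj (so3T Sg)); by rewrite trmxK.
Qed.

Lemma class_of g (a : 'I_n -> 'M[R]_3) (H : 'M[R]_3 -> Prop) : SO3 g ->
  (forall m, sym_group (conjf g^T a) m <-> H m) -> conj_class (sym_group a) H.
Proof.
move=> Sg HH; exists g; split => // m.
by rewrite (symg_conj _ _ Sg) HH.
Qed.

Lemma class_to (a : 'I_n -> 'M[R]_3) (H : 'M[R]_3 -> Prop) :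
  conj_class (sym_group a) H ->
  exists g, SO3 g /\ forall m, sym_group (conjf g^T a) m <-> H m.
Proof.
move=> [g [Sg HH]]; exists g; split => // m.
have E : g^T *m (g *m m *m g^T) *m g = m by rewrite conjK.
rewrite -{1}E -symg_conj //; rewrite -{2}E; exact: HH.
Qed.

Lemma conjfK g (a : 'I_n -> 'M[R]_3) : SO3 g -> conjf g (conjf g^T a) = a.
Proof.
move=> Sg; apply: functional_extensionality => k; rewrite /conjf trmxK.
by rewrite conjK'.
Qed.

Lemma conjf_sym g (a : 'I_n -> 'M[R]_3) : (forall k, (a k)^T = a k) ->
  forall k, (conjf g a k)^T = conjf g a k.
Proof. by move=> sa k; rewrite /conjf conjT sa. Qed.


Lemma matvec0 g : matvec g (zerov R) = zerov R.
Proof. apply: vec_ext; vs; ring. Qed.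

Lemma matvec_conj g c w : SO3 g ->
  matvec (g *m c *m g^T) (matvec g w) = matvec g (matvec c w).
Proof. by move=> Sg; rewrite !matvec_mul -(matvec_mul g^T); case: Sg => -> _; rewrite matvec1. Qed.

Lemma matvec_zero g w : SO3 g -> (matvec g w = zerov R <-> w = zerov R).
Proof. by move=> Sg; split => [/(matvec_inj Sg) //| ->]; rewrite matvec0. Qed.

Lemma tr3_zero_comm (a b : 'M[R]_3) : a^T = a -> b^T = b ->
  (tr3 (cross22 a b) = zerov R <-> a *m b = b *m a).
Proof.
move=> sa sb; have E := comm_skew sa sb; split => H.
  apply/eqP; rewrite -subr_eq0 E H.
  have -> : (fun i => -3 * zerov R i) = zerov R by apply: vec_ext; vs; ring.
  by rewrite skew0.
move: E; rewrite H subrr -skew0 => /skew_inj E.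
apply: (@scale_vec_inj R (-3)); first by rewrite oppr_eq0 pnatr_eq0.
rewrite -E; apply: vec_ext; vs; ring.
Qed.

Lemma cond1_rot g (b : 'I_n -> 'M[R]_3) : SO3 g -> (Cond1 (conjf g b) <-> Cond1 b).
Proof. by move=> Sg; split => H k; have := H k; rewrite /conjf dev_rot0. Qed.

Lemma cond2_rot g (b : 'I_n -> 'M[R]_3) : SO3 g -> (Cond2 (conjf g b) <-> Cond2 b).
Proof.
move=> Sg; rewrite /Cond2 /conjf; split => -[j [H1 [H2 H3]]]; exists j.
  split; first by rewrite -(dev_rot0 _ Sg).
  split; first by rewrite -(cross22_rot _ _ Sg) -conjM.
  by move=> k; rewrite -(cross22_rot _ _ Sg).
split; first by rewrite dev_rot0.
split; first by rewrite conjM // cross22_rot.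
by move=> k; rewrite cross22_rot.
Qed.

Lemma cond3_rot g (b : 'I_n -> 'M[R]_3) : SO3 g -> (forall k, (b k)^T = b k) ->
  (Cond3 (conjf g b) <-> Cond3 b).
Proof.
move=> Sg sb; rewrite /Cond3 /conjf.
have E1 : forall k l, tr3 (cross22 (g *m b k *m g^T) (g *m b l *m g^T)) = zerov R <->
   tr3 (cross22 (b k) (b l)) = zerov R by move=> k l; rewrite tr3_rot // matvec_zero.
have E2 : forall k, cross22 (g *m b k *m g^T) (g *m b k *m g^T *m (g *m b k *m g^T)) <> zero3 R <->
   cross22 (b k) (b k *m b k) <> zero3 R by move=> k; rewrite conjM // cross22_rot.
have E3 : forall k l, cross22 (g *m b k *m g^T) (g *m b l *m g^T) <> zero3 R <->
   cross22 (b k) (b l) <> zero3 R by move=> k l; rewrite cross22_rot.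
split => -[H1 H2]; (split; first by move=> k l; have := H1 k l; rewrite E1).
  case: H2 => [[j Hj]|[i [j Hj]]]; [left; exists j; rewrite -E2 | right; exists i, j; rewrite -E3]; done.
case: H2 => [[j Hj]|[i [j Hj]]]; [left; exists j; rewrite E2 | right; exists i, j; rewrite E3]; done.
Qed.

Lemma cond4_rot g (b : 'I_n -> 'M[R]_3) : SO3 g -> (forall k, (b k)^T = b k) ->
  (Cond4 (conjf g b) <-> Cond4 b).
Proof.
move=> Sg sb; rewrite /Cond4 /conjf.
have E : forall i j, tr3 (cross22 (g *m b i *m g^T) (g *m b j *m g^T)) = matvec g (tr3 (cross22 (b i) (b j))).
  by move=> i j; rewrite tr3_rot.
split => -[i [j /= [H1 H2]]]; exists i, j => /=.
  move: H1 H2; rewrite E matvec_zero // => H1 H2; split => // k.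
  by have := H2 k; rewrite matvec_conj // cross_rot // matvec_zero.
rewrite E matvec_zero //; split => // k.
by rewrite matvec_conj // cross_rot // matvec_zero.
Qed.
End Fam.
End C.

Section D.
Variable R : realType.
Implicit Types (c g m : 'M[R]_3).

Ltac mxs := rewrite ?(mxE, sum3E) /=.
Ltac vs := rewrite /matvec /dotv /zerov ?(crossv0, crossv1, crossv2, mxE, sum3E) /=.
Ltac cs := rewrite /cross22 /sym3 /= ?(C0, C1, C2).

Definition Rx90 : 'M[R]_3 := mx3 [:: [:: 1; 0; 0]; [:: 0; 0; -1]; [:: 0; 1; 0]].
Definition Ry90 : 'M[R]_3 := mx3 [:: [:: 0; 0; 1]; [:: 0; 1; 0]; [:: -1; 0; 0]].
Definition Rz90 : 'M[R]_3 := Rz 0 1.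
Definition Pc : 'M[R]_3 := mx3 [:: [:: 0; 0; 1]; [:: 1; 0; 0]; [:: 0; 1; 0]].

Ltac so3_tac := split; [apply: mx3_ext; rewrite /mx3; mxs; ring | rewrite det3E /det3 /mx3; mxs; ring].

Lemma Rx90_so3 : SO3 Rx90. Proof. rewrite /Rx90; so3_tac. Qed.
Lemma Ry90_so3 : SO3 Ry90. Proof. rewrite /Ry90; so3_tac. Qed.
Lemma Rz90_so3 : SO3 Rz90. Proof. rewrite /Rz90 /Rz; so3_tac. Qed.
Lemma Pc_so3 : SO3 Pc. Proof. rewrite /Pc; so3_tac. Qed.
Lemma Rxpi_so3 : SO3 (Rxpi R). Proof. rewrite /Rxpi; so3_tac. Qed.
Lemma Rypi_so3 : SO3 (Rypi R). Proof. rewrite /Rypi; so3_tac. Qed.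
Lemma Rzpi_so3 : SO3 (Rzpi R). Proof. rewrite /Rzpi; so3_tac. Qed.

Lemma fix_comm m c : SO3 m -> act2 m c = c -> m *m c = c *m m.
Proof.
move=> [Sm _] H; by rewrite -[in RHS]H /act2 -!mulmxA Sm mulmx1.
Qed.

Lemma comm_fix m c : SO3 m -> m *m c = c *m m -> act2 m c = c.
Proof. by move=> Sm H; rewrite /act2 H -mulmxA (so3_tr Sm) mulmx1. Qed.

Lemma fixE m c : act2 m c = c -> forall i j, (m *m c *m m^T) i j = c i j.
Proof. by move=> H i j; rewrite /act2 in H; rewrite H. Qed.

Lemma from_eq (P Q k : R) : P = k * Q -> Q = 0 -> P = 0.
Proof. by move=> -> ->; rewrite mulr0. Qed.

Definition Dd (x0 x1 x2 y0 y1 y2 : R) := x0*y1 - x1*y0 + x1*y2 - x2*y1 + x2*y0 - x0*y2.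

Lemma cross_diag x0 x1 x2 y0 y1 y2 :
  cross22 (diag3 x0 x1 x2) (diag3 y0 y1 y2) = zero3 R <-> Dd x0 x1 x2 y0 y1 y2 = 0.
Proof.
split.
  move/(congr1 (fun T => T i0 i1 i2)); rewrite /zero3 /diag3 /mx3; cs; mxs => H.
  by apply: (from_eq (k := 6) _ H); rewrite /Dd; field.
move=> H; apply: functional_extensionality => p; apply: functional_extensionality => q;
apply: functional_extensionality => r; rewrite /zero3.
case: (ord3 p) => ->; case: (ord3 q) => ->; case: (ord3 r) => ->; rewrite /diag3 /mx3; cs; mxs;
  first [ring | by apply: (from_eq (k:=6^-1) _ H); rewrite /Dd; field
        | by apply: (from_eq (k:=-6^-1) _ H); rewrite /Dd; field].
Qed.

Lemma lc2' (E X1 X2 k1 k2 : R) : X1 = 0 -> X2 = 0 -> E = k1 * X1 + k2 * X2 -> E = 0.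
Proof. by move=> -> -> ->; rewrite !mulr0 addr0. Qed.

Lemma comm0 c d : c *m d = d *m c -> forall i j, (c *m d - d *m c) i j = 0.
Proof. by move=> H i j; rewrite H subrr mxE. Qed.

Ltac lct key EX EY p q k1 k2 :=
  apply: key; first [ apply: (lc2' (k1:=k1) (k2:=k2) (EX p q) (EY p q)); rewrite /diag3 /mx3 /Dd; mxs; ring
                    | apply: (lc2' (k1:=-k1) (k2:=-k2) (EX p q) (EY p q)); rewrite /diag3 /mx3 /Dd; mxs; ring ].

Lemma diag_of_comm c (x0 x1 x2 y0 y1 y2 : R) :
  c *m diag3 x0 x1 x2 = diag3 x0 x1 x2 *m c ->
  c *m diag3 y0 y1 y2 = diag3 y0 y1 y2 *m c ->
  Dd x0 x1 x2 y0 y1 y2 != 0 -> c = diag3 (c i0 i0) (c i1 i1) (c i2 i2).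
Proof.
move=> HX HY D0.
have EX := comm0 HX; have EY := comm0 HY.
have key : forall p q, (c p q * Dd x0 x1 x2 y0 y1 y2 = 0) -> c p q = 0.
  by move=> p q /eqP; rewrite mulf_eq0 (negPf D0) orbF => /eqP.
apply: mx3_ext; rewrite /diag3 /mx3; mxs; rewrite ?mul1r ?mulr1 ?mul0r ?mulr0 ?addr0 ?add0r //.
- lct key EX EY constr:(i0) constr:(i1) (y2 - y0) (-(x2 - x0)).
- lct key EX EY constr:(i0) constr:(i2) (y1 - y0) (-(x1 - x0)).
- lct key EX EY constr:(i1) constr:(i0) (y2 - y1) (-(x2 - x1)).
- lct key EX EY constr:(i1) constr:(i2) (y0 - y1) (-(x0 - x1)).
- lct key EX EY constr:(i2) constr:(i0) (y1 - y2) (-(x1 - x2)).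
- lct key EX EY constr:(i2) constr:(i1) (y0 - y2) (-(x0 - x2)).
Qed.

Lemma pm1 (e : R) : e ^+ 2 = 1 -> e = 1 \/ e = -1.
Proof.
move=> H; have : (e - 1) * (e + 1) = 0.
  by rewrite (_ : (e - 1) * (e + 1) = e ^+ 2 - 1); [rewrite H subrr | ring].
move/eqP; rewrite mulf_eq0 => /orP[/eqP|/eqP] h; [left|right]; lra.
Qed.

Lemma diag_so3 (e0 e1 e2 : R) : SO3 (diag3 e0 e1 e2) ->
  [/\ e0 ^+ 2 = 1, e1 ^+ 2 = 1, e2 ^+ 2 = 1 & e0 * e1 * e2 = 1].
Proof.
move=> [H D]; move: D; rewrite det3E /det3 /diag3 /mx3; mxs => D.
have E := fun i j => congr1 (fun M : 'M[R]_3 => M i j) H.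
have := E i0 i0; have := E i1 i1; have := E i2 i2; rewrite /diag3 /mx3; mxs => h2 h1 h0.
split; rewrite ?expr2; [lra|lra|lra|]. rewrite -D; ring.
Qed.

Lemma D2_char m (x0 x1 x2 y0 y1 y2 : R) : SO3 m ->
  m *m diag3 x0 x1 x2 = diag3 x0 x1 x2 *m m ->
  m *m diag3 y0 y1 y2 = diag3 y0 y1 y2 *m m ->
  Dd x0 x1 x2 y0 y1 y2 != 0 -> D2grp m.
Proof.
move=> Sm HX HY D0; have Em := diag_of_comm HX HY D0.
rewrite Em in Sm *; have [h0 h1 h2 d] := diag_so3 Sm.
rewrite /D2grp.
have eqd : forall a b c : R, [/\ m i0 i0 = a, m i1 i1 = b & m i2 i2 = c] ->
  diag3 (m i0 i0) (m i1 i1) (m i2 i2) = diag3 a b c by move=> a b c [-> -> ->].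
case: (pm1 h0) => E0; case: (pm1 h1) => E1; case: (pm1 h2) => E2; rewrite (eqd _ _ _ (And3 E0 E1 E2));
  rewrite E0 E1 E2 in d.
- left; apply: mx3_ext; rewrite /diag3 /mx3; mxs; ring.
- exfalso; clear -d; lra.
- exfalso; clear -d; lra.
- right; left; apply: mx3_ext; rewrite /diag3 /Rxpi /mx3; mxs; ring.
- exfalso; clear -d; lra.
- right; right; left; apply: mx3_ext; rewrite /diag3 /Rypi /mx3; mxs; ring.
- right; right; right; apply: mx3_ext; rewrite /diag3 /Rzpi /mx3; mxs; ring.
- exfalso; clear -d; lra.
Qed.

Lemma D2_fix m : D2grp m -> SO3 m /\ forall x0 x1 x2 : R, act2 m (diag3 x0 x1 x2) = diag3 x0 x1 x2.
Proof.
case=> [->|[->|[->|->]]]; split;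
  try exact: so3_1; try exact: Rxpi_so3; try exact: Rypi_so3; try exact: Rzpi_so3;
  move=> x0 x1 x2; apply: mx3_ext; rewrite /act2 /diag3 /Rxpi /Rypi /Rzpi /mx3; mxs; ring.
Qed.

Lemma lc1 (E F X k : R) : X = 0 -> E - F = k * X -> E = F.
Proof. move=> -> /eqP; rewrite mulr0 subr_eq0 => /eqP //. Qed.

Lemma act2M a b c : act2 (a *m b) c = act2 a (act2 b c).
Proof. by rewrite /act2 trmx_mul !mulmxA. Qed.

Lemma Rz_fix (cc s g d : R) : cc ^+ 2 + s ^+ 2 = 1 ->
  act2 (Rz cc s) (diag3 g g d) = diag3 g g d.
Proof.
move=> H; have X : cc ^+ 2 + s ^+ 2 - 1 = 0 by rewrite H subrr.
apply: mx3_ext; rewrite /act2 /diag3 /Rz /mx3; mxs;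
  first [ring | apply: (lc1 (k := g) X); ring].
Qed.

Lemma O2_fix m : O2grp m -> SO3 m /\ forall g d : R, act2 m (diag3 g g d) = diag3 g g d.
Proof.
case=> cc [s [H [->| ->]]].
  by split; [apply: Rz_so3 | move=> g d; apply: Rz_fix].
split; first by apply: so3M; [apply: Rz_so3 | apply: Rxpi_so3].
by move=> g d; rewrite act2M (proj2 (D2_fix (or_intror (or_introl erefl)))) Rz_fix.
Qed.

Lemma sq0 (x y : R) : x ^+ 2 + y ^+ 2 = 0 -> x = 0 /\ y = 0.
Proof.
move=> H; have := sqr_ge0 x; have := sqr_ge0 y => hy hx.
have x2 : x ^+ 2 = 0 by lra.
have y2 : y ^+ 2 = 0 by lra.
by split; apply/eqP; rewrite -sqrf_eq0; apply/eqP.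
Qed.

Lemma O2_char m (al be : R) : SO3 m -> m *m diag3 al al be = diag3 al al be *m m ->
  al != be -> O2grp m.
Proof.
move=> Sm HX ne.
have EX := comm0 HX.
have ne' : be - al != 0 by rewrite subr_eq0 eq_sym.
have ne'' : al - be != 0 by rewrite subr_eq0.
have z : forall p q (k : R), k != 0 -> m p q * k = 0 -> m p q = 0.
  by move=> p q k k0 /eqP; rewrite mulf_eq0 (negPf k0) orbF => /eqP.
have m02 : m i0 i2 = 0 by apply: (z _ _ _ ne'); rewrite -(EX i0 i2) /diag3 /mx3; mxs; ring.
have m12 : m i1 i2 = 0 by apply: (z _ _ _ ne'); rewrite -(EX i1 i2) /diag3 /mx3; mxs; ring.
have m20 : m i2 i0 = 0 by apply: (z _ _ _ ne''); rewrite -(EX i2 i0) /diag3 /mx3; mxs; ring.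
have m21 : m i2 i1 = 0 by apply: (z _ _ _ ne''); rewrite -(EX i2 i1) /diag3 /mx3; mxs; ring.
have [O D] := Sm.
move: D; rewrite det3E /det3 m02 m12 m20 m21 => D.
have E := fun i j => congr1 (fun M : 'M[R]_3 => M i j) O.
have := E i0 i0; have := E i1 i1; have := E i0 i1; have := E i2 i2;
  mxs; rewrite m02 m12 m20 m21 => e22 e01 e11 e00.
have m22 : m i2 i2 ^+ 2 = 1 by rewrite expr2; lra.
case: (pm1 m22) => M22; rewrite M22 in D.
  have S : (m i0 i0 - m i1 i1) ^+ 2 + (m i0 i1 + m i1 i0) ^+ 2 = 0 by nra.
  have [a1 a2] := sq0 S.
  have {}a1 : m i1 i1 = m i0 i0 by lra.
  have {}a2 : m i0 i1 = - m i1 i0 by lra.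
  exists (m i0 i0), (m i1 i0); split; first by nra.
  left; apply: mx3_ext; rewrite /Rz /mx3; mxs; rewrite ?m02 ?m12 ?m20 ?m21 ?M22 ?a1 ?a2 //.
have S : (m i0 i0 + m i1 i1) ^+ 2 + (m i0 i1 - m i1 i0) ^+ 2 = 0 by nra.
have [a1 a2] := sq0 S.
have {}a1 : m i1 i1 = - m i0 i0 by lra.
have {}a2 : m i0 i1 = m i1 i0 by lra.
exists (m i0 i0), (m i1 i0); split; first by nra.
right; apply: mx3_ext; rewrite /Rz /Rxpi /mx3; mxs; rewrite ?m02 ?m12 ?m20 ?m21 ?M22 ?a1 ?a2; ring.
Qed.
End D.

Section E.
Variable R : realType.
Implicit Types (c d g m : 'M[R]_3).

Ltac mxs := rewrite ?(mxE, sum3E) /=.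
Ltac vs := rewrite /matvec /dotv /zerov ?(crossv0, crossv1, crossv2, mxE, sum3E) /=.
Ltac cs := rewrite /cross22 /sym3 /= ?(C0, C1, C2).

Lemma scal c : dev c = 0 -> c = diag3 (\tr c / 3) (\tr c / 3) (\tr c / 3).
Proof.
rewrite /dev => /eqP; rewrite subr_eq0 => /eqP Ec.
rewrite [LHS]Ec; apply: mx3_ext; rewrite /diag3 /mx3; mxs; ring.
Qed.

Lemma dev_diag3 (x y z : R) : dev (diag3 x y z) = 0 -> x = y /\ y = z.
Proof.
move=> H; have E := fun i j => congr1 (fun M : 'M[R]_3 => M i j) H.
have := E i0 i0; have := E i1 i1; rewrite /dev /mxtrace /diag3 /mx3; mxs => h1 h0.
split; lra.
Qed.

Lemma dev_diag3_0 (x : R) : dev (diag3 x x x) = 0.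
Proof. apply: mx3_ext; rewrite /dev /mxtrace /diag3 /mx3; mxs; by field. Qed.

Lemma cross_scal c d : dev c = 0 -> cross22 c d = zero3 R.
Proof.
move/scal => ->; apply: F_cross22 => x.
rewrite /F /diag3 /mx3; vs; ring.
Qed.

Lemma TI_cross (al be : R) d : al != be -> d^T = d -> cross22 (diag3 al al be) d = zero3 R ->
  d = diag3 (d i0 i0) (d i0 i0) (d i2 i2).
Proof.
move=> ne sd H; have [d1 d2 d3] := symE sd.
have ne' : be - al != 0 by rewrite subr_eq0 eq_sym.
have E := fun p q r => congr1 (fun T => T p q r) H.
have z : forall t : R, (be - al) * t = 0 -> t = 0.
  by move=> t /eqP; rewrite mulf_eq0 (negPf ne') /= => /eqP.
Ltac tic E d1 d2 d3 p q r :=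
  let Ei := fresh "Ei" in
  have Ei := E p q r; rewrite /zero3 /diag3 /mx3 in Ei; rewrite /cross22 /sym3 /= ?(C0, C1, C2) in Ei;
  rewrite ?(mxE, sum3E) /= ?d1 ?d2 ?d3 in Ei;
  first [ by apply: (from_eq (k:=6) _ Ei); field | by apply: (from_eq (k:=-6) _ Ei); field
        | by apply: (from_eq (k:=3) _ Ei); field | by apply: (from_eq (k:=-3) _ Ei); field ].
have h01 : d i0 i1 = 0 by apply: z; tic E d1 d2 d3 constr:(i0) constr:(i0) constr:(i2).
have h02 : d i0 i2 = 0 by apply: z; tic E d1 d2 d3 constr:(i1) constr:(i2) constr:(i2).
have h12 : d i1 i2 = 0 by apply: z; tic E d1 d2 d3 constr:(i0) constr:(i2) constr:(i2).
have h11 : d i0 i0 - d i1 i1 = 0 by apply: z; tic E d1 d2 d3 constr:(i0) constr:(i1) constr:(i2).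
apply: mx3_ext; rewrite /diag3 /mx3; mxs; rewrite ?d1 ?d2 ?d3 ?h01 ?h02 ?h12 //; lra.
Qed.

Lemma diag3M (a b e x y z : R) : diag3 a b e *m diag3 x y z = diag3 (a * x) (b * y) (e * z).
Proof. apply: mx3_ext; rewrite /diag3 /mx3; mxs; ring. Qed.

Lemma cross_rotT (g a b : 'M[R]_3) : SO3 g ->
  (cross22 (g^T *m a *m g) (g^T *m b *m g) = zero3 R <-> cross22 a b = zero3 R).
Proof. by move=> Sg; have := @cross22_rot _ g^T a b (so3T Sg); rewrite trmxK. Qed.

Lemma conjMT (g a b : 'M[R]_3) : SO3 g -> (g^T *m a *m g) *m (g^T *m b *m g) = g^T *m (a *m b) *m g.
Proof. by move=> Sg; have := @conjM _ g^T a b (so3T Sg); rewrite trmxK. Qed.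

Lemma dev_rotT (g a : 'M[R]_3) : SO3 g -> (dev (g^T *m a *m g) = 0 <-> dev a = 0).
Proof. by move=> Sg; have := @dev_rot0 _ g^T a (so3T Sg); rewrite trmxK. Qed.

Lemma conj_comp (g h a : 'M[R]_3) : (g *m h)^T *m a *m (g *m h) = h^T *m (g^T *m a *m g) *m h.
Proof. by rewrite trmx_mul !mulmxA. Qed.

Lemma uni c : c^T = c -> dev c <> 0 -> cross22 c (c *m c) = zero3 R ->
  exists g (al be : R), [/\ SO3 g, al != be & g^T *m c *m g = diag3 al al be].
Proof.
move=> sc dc cc.
have [g [x [y [z [Sg Hd]]]]] := diagonalize sc.
have cD : cross22 (diag3 x y z) (diag3 (x * x) (y * y) (z * z)) = zero3 R.
  by rewrite -diag3M -Hd conjMT // cross_rotT.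
have dD : dev (diag3 x y z) <> 0 by rewrite -Hd dev_rotT.
move/cross_diag: cD => cD.
have F : (x - y) * (y - z) * (z - x) = 0.
  first [ apply: (from_eq (k := 1) _ cD); rewrite /Dd; ring
        | apply: (from_eq (k := -1) _ cD); rewrite /Dd; ring ].
move/eqP: F; rewrite !mulf_eq0 !subr_eq0 => /orP[/orP[/eqP xy|/eqP yz]|/eqP zx].
- exists g, x, z; split => //; last by rewrite Hd xy.
  by apply/eqP => xz; apply: dD; rewrite -xz -xy dev_diag3_0.
- exists (g *m Pc R), y, x; split.
  + by apply: so3M => //; apply: Pc_so3.
  + by apply/eqP => yx; apply: dD; rewrite -yz -yx dev_diag3_0.
  + rewrite conj_comp Hd yz; apply: mx3_ext; rewrite /diag3 /Pc /mx3; mxs; ring.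
- exists (g *m (Pc R)^T), x, y; split.
  + by apply: so3M => //; apply: so3T; apply: Pc_so3.
  + by apply/eqP => xy; apply: dD; rewrite -xy -zx dev_diag3_0.
  + rewrite conj_comp Hd -zx trmxK; apply: mx3_ext; rewrite /diag3 /Pc /mx3; mxs; ring.
Qed.
End E.

Section F.
Variable R : realType.
Implicit Types (c d g m : 'M[R]_3).

Ltac mxs := rewrite ?(mxE, sum3E) /=.

Lemma fix_scal d : d^T = d -> act2 (Rz90 R) d = d -> act2 (Rx90 R) d = d -> dev d = 0.
Proof.
move=> sd Hz Hx; have [s1 s2 s3] := symE sd.
have Ez := fixE Hz; have Ex := fixE Hx; clear Hz Hx sd.
have := Ez i0 i0; have := Ez i0 i1; have := Ez i0 i2; have := Ez i1 i2;
have := Ex i1 i1; have := Ex i1 i2; have := Ex i0 i1;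
rewrite /Rz90 /Rz /Rx90 /mx3; mxs; rewrite ?s1 ?s2 ?s3 => e1 e2 e3 e4 e5 e6 e7.
clear Ez Ex.
apply: mx3_ext; rewrite /dev /mxtrace; mxs; rewrite ?s1 ?s2 ?s3; lra.
Qed.

Lemma scal_fix d m : dev d = 0 -> SO3 m -> act2 m d = d.
Proof.
move/scal => -> Sm; set t := \tr d / 3.
have -> : diag3 t t t = t%:M by apply: mx3_ext; rewrite /diag3 /mx3; mxs; ring.
by rewrite /act2 mul_mx_scalar -scalemxAl (so3_tr Sm) scalemx1.
Qed.

Lemma fixRz90_TI d : d^T = d -> act2 (Rz90 R) d = d -> d = diag3 (d i0 i0) (d i0 i0) (d i2 i2).
Proof.
move=> sd Hz; have [s1 s2 s3] := symE sd.
have Ez := fixE Hz; clear Hz sd.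
have := Ez i0 i0; have := Ez i0 i1; have := Ez i0 i2; have := Ez i1 i2;
rewrite /Rz90 /Rz /mx3; mxs; rewrite ?s1 ?s2 ?s3 => e1 e2 e3 e4.
clear Ez.
apply: mx3_ext; rewrite /diag3 /mx3; mxs; rewrite ?s1 ?s2 ?s3; lra.
Qed.

Lemma O2_Rz90 : O2grp (Rz90 R).
Proof. by exists 0, 1; split; [ring | left]. Qed.

Lemma not_O2_Rx90 : ~ O2grp (Rx90 R).
Proof.
move=> [cc [s [_ [E|E]]]]; move/(congr1 (fun M : 'M[R]_3 => M i2 i2)): E;
  rewrite /Rx90 /Rz /Rxpi /mx3; mxs => E; lra.
Qed.
End F.

Section H.
Variable R : realType.
Implicit Types (c d g m : 'M[R]_3).

Ltac mxs := rewrite ?(mxE, sum3E) /=.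

Lemma fix_D2_diag d : d^T = d -> act2 (Rxpi R) d = d -> act2 (Rypi R) d = d ->
  d = diag3 (d i0 i0) (d i1 i1) (d i2 i2).
Proof.
move=> sd Hx Hy; have [s1 s2 s3] := symE sd.
have Ex := fixE Hx; have Ey := fixE Hy; clear Hx Hy sd.
have := Ex i0 i1; have := Ex i0 i2; have := Ey i1 i2;
rewrite /Rxpi /Rypi /mx3; mxs; rewrite ?s1 ?s2 ?s3 => e1 e2 e3.
clear Ex Ey.
apply: mx3_ext; rewrite /diag3 /mx3; mxs; rewrite ?s1 ?s2 ?s3; lra.
Qed.

Lemma Rz90_fix (x z : R) : act2 (Rz90 R) (diag3 x x z) = diag3 x x z.
Proof. apply: mx3_ext; rewrite /act2 /Rz90 /Rz /diag3 /mx3; mxs; ring. Qed.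
Lemma Rx90_fix (x y : R) : act2 (Rx90 R) (diag3 x y y) = diag3 x y y.
Proof. apply: mx3_ext; rewrite /act2 /Rx90 /diag3 /mx3; mxs; ring. Qed.
Lemma Ry90_fix (x y : R) : act2 (Ry90 R) (diag3 x y x) = diag3 x y x.
Proof. apply: mx3_ext; rewrite /act2 /Ry90 /diag3 /mx3; mxs; ring. Qed.

Lemma D2_offdiag m : D2grp m -> [/\ m i0 i1 = 0, m i0 i2 = 0 & m i1 i2 = 0].
Proof.
case=> [->|[->|[->|->]]]; rewrite /Rxpi /Rypi /Rzpi /mx3; mxs; by split.
Qed.

Lemma not_D2_Rz90 : ~ D2grp (Rz90 R).
Proof. move/D2_offdiag => [h _ _]; move: h; rewrite /Rz90 /Rz /mx3; mxs => h; lra. Qed.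
Lemma not_D2_Rx90 : ~ D2grp (Rx90 R).
Proof. move/D2_offdiag => [_ _ h]; move: h; rewrite /Rx90 /mx3; mxs => h; lra. Qed.
Lemma not_D2_Ry90 : ~ D2grp (Ry90 R).
Proof. move/D2_offdiag => [_ h _]; move: h; rewrite /Ry90 /mx3; mxs => h; lra. Qed.

Lemma comm_block c (al be : R) : c *m diag3 al al be = diag3 al al be *m c -> al != be ->
  c i0 i2 = 0 /\ c i1 i2 = 0.
Proof.
move=> H ne; have E := comm0 H.
have ne' : be - al != 0 by rewrite subr_eq0 eq_sym.
have z : forall t : R, t * (be - al) = 0 -> t = 0.
  by move=> t /eqP; rewrite mulf_eq0 (negPf ne') orbF => /eqP.
split; apply: z; [rewrite -(E i0 i2) | rewrite -(E i1 i2)]; rewrite /diag3 /mx3; mxs; ring.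
Qed.

Lemma RzT_fix (cc s g d : R) : cc ^+ 2 + s ^+ 2 = 1 ->
  (Rz cc s)^T *m diag3 g g d *m Rz cc s = diag3 g g d.
Proof.
move=> H; have X : cc ^+ 2 + s ^+ 2 - 1 = 0 by rewrite H subrr.
apply: mx3_ext; rewrite /diag3 /Rz /mx3; mxs;
  first [ring | apply: (lc1 (k := g) X); ring].
Qed.

Lemma Dd_xxz (x1 z1 x y z : R) : Dd x1 x1 z1 x y z = (z1 - x1) * (x - y).
Proof. rewrite /Dd; ring. Qed.
Lemma Dd_xyy (x1 y1 x y z : R) : Dd x1 y1 y1 x y z = (x1 - y1) * (y - z).
Proof. rewrite /Dd; ring. Qed.
Lemma Dd_xyx (x1 y1 x y z : R) : Dd x1 y1 x1 x y z = (y1 - x1) * (z - x).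
Proof. rewrite /Dd; ring. Qed.

Lemma D2_degenerate n (b : 'I_n -> 'M[R]_3) :
  (forall k, b k = diag3 (b k i0 i0) (b k i1 i1) (b k i2 i2)) ->
  (forall j, cross22 (b j) (b j *m b j) = zero3 R) ->
  (forall i j, cross22 (b i) (b j) = zero3 R) ->
  exists m, [/\ SO3 m, ~ D2grp m & forall k, act2 m (b k) = b k].
Proof.
move=> Db cjj cij.
have Dij : forall i j, Dd (b i i0 i0) (b i i1 i1) (b i i2 i2) (b j i0 i0) (b j i1 i1) (b j i2 i2) = 0.
  by move=> i j; apply/cross_diag; rewrite -Db -Db.
have Djj : forall j, (b j i0 i0 - b j i1 i1) * (b j i1 i1 - b j i2 i2) * (b j i2 i2 - b j i0 i0) = 0.
  move=> j; have := cjj j; rewrite {1 2 3}(Db j) diag3M => /cross_diag h.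
  first [ apply: (from_eq (k := 1) _ h); rewrite /Dd; ring
        | apply: (from_eq (k := -1) _ h); rewrite /Dd; ring ].
have [[k1 Hk1]|Hall] := classic (exists k, b k i0 i0 <> b k i1 i1); last first.
  exists (Rz90 R); split; [exact: Rz90_so3 | exact: not_D2_Rz90 |] => k.
  have e : b k i1 i1 = b k i0 i0 by apply: NNPP => H; apply: Hall; exists k => H'; apply: H; rewrite H'.
  by rewrite Db e Rz90_fix.
have := Djj k1; move/eqP; rewrite !mulf_eq0 !subr_eq0.
case/orP => [/orP[/eqP //|/eqP yz]|/eqP zx].
- exists (Rx90 R); split; [exact: Rx90_so3 | exact: not_D2_Rx90 |] => k.
  have := Dij k1 k; rewrite -yz Dd_xyy => /eqP; rewrite mulf_eq0 subr_eq0.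
  case/orP => [/eqP //|]; rewrite subr_eq0 => /eqP e.
  by rewrite Db e Rx90_fix.
- exists (Ry90 R); split; [exact: Ry90_so3 | exact: not_D2_Ry90 |] => k.
  have := Dij k1 k; rewrite zx Dd_xyx => /eqP; rewrite mulf_eq0 subr_eq0.
  case/orP => [/eqP h|]; first by exfalso; apply: Hk1; rewrite h.
  rewrite subr_eq0 => /eqP e.
  by rewrite Db e Ry90_fix.
Qed.

Lemma fin3 n (b : 'I_n -> 'M[R]_3) (x0 x1 x2 y0 y1 y2 : R) (X Y : 'M[R]_3) :
  X = diag3 x0 x1 x2 -> Y = diag3 y0 y1 y2 -> Dd x0 x1 x2 y0 y1 y2 != 0 ->
  (forall k, b k *m X = X *m b k /\ b k *m Y = Y *m b k) ->
  (forall m, SO3 m -> (forall k, act2 m (b k) = b k) -> m *m X = X *m m /\ m *m Y = Y *m m) ->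
  forall m, sym_group b m <-> D2grp m.
Proof.
move=> EX EY D0 Hb Hm.
have Db : forall k, b k = diag3 (b k i0 i0) (b k i1 i1) (b k i2 i2).
  move=> k; have [h1 h2] := Hb k; rewrite EX EY in h1 h2.
  exact: diag_of_comm h1 h2 D0.
move=> m; split.
  move=> [Sm Fm]; have [h1 h2] := Hm m Sm Fm; rewrite EX EY in h1 h2.
  exact: D2_char Sm h1 h2 D0.
move=> Dm; have [Sm F] := D2_fix Dm; split => // k.
by rewrite Db F.
Qed.
End H.

Section I.
Variable R : realType.
Implicit Types (c d g m : 'M[R]_3).

Ltac mxs := rewrite ?(mxE, sum3E) /=.
Ltac vs := rewrite /matvec /dotv /zerov ?(crossv0, crossv1, crossv2, mxE, sum3E) /=.
Ltac cs := rewrite /cross22 /sym3 /= ?(C0, C1, C2).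

Definition blk d := d i0 i2 = 0 /\ d i1 i2 = 0.

Lemma fix_Rzpi_block d : d^T = d -> act2 (Rzpi R) d = d -> blk d.
Proof.
move=> sd Hz; have [s1 s2 s3] := symE sd.
have Ez := fixE Hz; clear Hz sd.
have := Ez i0 i2; have := Ez i1 i2; rewrite /Rzpi /mx3; mxs => e1 e2.
clear Ez; split; lra.
Qed.

Lemma Rzpi_fix d : d^T = d -> blk d -> act2 (Rzpi R) d = d.
Proof.
move=> sd [h1 h2]; have [s1 s2 s3] := symE sd.
apply: mx3_ext; rewrite /act2 /Rzpi /mx3; mxs; rewrite ?s1 ?s2 ?s3 ?h1 ?h2; ring.
Qed.

Lemma Z2_fix m : Z2grp m -> SO3 m /\ forall d, d^T = d -> blk d -> act2 m d = d.
Proof.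
case=> ->; split.
- exact: so3_1.
- by move=> d _ _; rewrite /act2 trmx1 mul1mx mulmx1.
- exact: Rzpi_so3.
- by move=> d; apply: Rzpi_fix.
Qed.

Lemma not_Z2_Rz90 : ~ Z2grp (Rz90 R).
Proof.
case=> E; move/(congr1 (fun M : 'M[R]_3 => M i0 i1)): E;
  rewrite /Rz90 /Rz /Rzpi /mx3; mxs => E; lra.
Qed.

Lemma Rz90_fix_blk d : d^T = d -> blk d -> d i0 i1 = 0 -> d i0 i0 = d i1 i1 ->
  act2 (Rz90 R) d = d.
Proof.
move=> sd [h1 h2] h3 h4; have [s1 s2 s3] := symE sd.
have -> : d = diag3 (d i0 i0) (d i0 i0) (d i2 i2).
  apply: mx3_ext; rewrite /diag3 /mx3; mxs; rewrite ?s1 ?s2 ?s3 ?h1 ?h2 ?h3 ?h4 //.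
by rewrite Rz90_fix.
Qed.

Lemma Rz_blk (cc s : R) d : d^T = d -> blk d -> blk ((Rz cc s)^T *m d *m Rz cc s).
Proof.
move=> sd [h1 h2]; have [s1 s2 s3] := symE sd.
split; rewrite /Rz /mx3; mxs; rewrite ?s1 ?s2 ?s3 ?h1 ?h2; ring.
Qed.

Lemma not_Z2_RxR (cc s : R) : ~ Z2grp (Rz cc s *m Rxpi R *m (Rz cc s)^T).
Proof.
case=> E; move/(congr1 (fun M : 'M[R]_3 => M i2 i2)): E;
  rewrite /Rz /Rzpi /Rxpi /mx3; mxs => E; lra.
Qed.

Lemma RxR_fix (cc s x y z : R) d : cc ^+ 2 + s ^+ 2 = 1 ->
  (Rz cc s)^T *m d *m Rz cc s = diag3 x y z ->
  act2 (Rz cc s *m Rxpi R *m (Rz cc s)^T) d = d.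
Proof.
move=> H Hd; have Sz := Rz_so3 H.
rewrite !act2M.
have -> : act2 (Rz cc s)^T d = (Rz cc s)^T *m d *m Rz cc s by rewrite /act2 trmxK.
rewrite Hd (proj2 (D2_fix (or_intror (or_introl erefl)))) -Hd.
by rewrite /act2 conjK'.
Qed.

Definition bmx (p q r t : R) : 'M[R]_3 := mx3 [:: [:: p; q; 0]; [:: q; r; 0]; [:: 0; 0; t]].

Lemma blk_form d : d^T = d -> blk d -> d = bmx (d i0 i0) (d i0 i1) (d i1 i1) (d i2 i2).
Proof.
move=> sd [h1 h2]; have [s1 s2 s3] := symE sd.
apply: mx3_ext; rewrite /bmx /mx3; mxs; rewrite ?s1 ?s2 ?s3 ?h1 ?h2 //.
Qed.

Definition kap (p1 q1 r1 p2 q2 r2 : R) := q2 * (p1 - r1) - q1 * (p2 - r2).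

Lemma kap_comm (p1 q1 r1 t1 p2 q2 r2 t2 : R) :
  bmx p1 q1 r1 t1 *m bmx p2 q2 r2 t2 <> bmx p2 q2 r2 t2 *m bmx p1 q1 r1 t1 ->
  kap p1 q1 r1 p2 q2 r2 != 0.
Proof.
move=> H; apply/eqP => k0; apply: H.
apply: mx3_ext; rewrite /bmx /mx3; mxs; try ring; move: k0; rewrite /kap => k0; lra.
Qed.

Lemma Z2_char m (p1 q1 r1 t1 p2 q2 r2 t2 : R) : SO3 m ->
  m *m bmx p1 q1 r1 t1 = bmx p1 q1 r1 t1 *m m ->
  m *m bmx p2 q2 r2 t2 = bmx p2 q2 r2 t2 *m m ->
  kap p1 q1 r1 p2 q2 r2 != 0 -> Z2grp m.
Proof.
move=> Sm H1 H2 K.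
set d1 := bmx p1 q1 r1 t1 in H1; set d2 := bmx p2 q2 r2 t2 in H2.
have HC : m *m (d1 *m d2 - d2 *m d1) = (d1 *m d2 - d2 *m d1) *m m.
  rewrite mulmxBr mulmxBl !mulmxA H1 -!mulmxA H2 !mulmxA H2 -!mulmxA H1 //.
have EC := comm0 HC; have E1 := comm0 H1; have E2 := comm0 H2.
rewrite /d1 /d2 in EC E1 E2; clear H1 H2 HC d1 d2.
have z : forall t : R, t * kap p1 q1 r1 p2 q2 r2 = 0 -> t = 0.
  by move=> t /eqP; rewrite mulf_eq0 (negPf K) orbF => /eqP.
Ltac fe E p q := first [ apply: (from_eq (k := 1) _ (E p q)); rewrite /bmx /kap /mx3; mxs; ring
                      | apply: (from_eq (k := -1) _ (E p q)); rewrite /bmx /kap /mx3; mxs; ring ].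
have m12 : m i1 i2 = 0 by apply: z; fe EC constr:(i0) constr:(i2).
have m02 : m i0 i2 = 0 by apply: z; fe EC constr:(i1) constr:(i2).
have m21 : m i2 i1 = 0 by apply: z; fe EC constr:(i2) constr:(i0).
have m20 : m i2 i0 = 0 by apply: z; fe EC constr:(i2) constr:(i1).
have m11 : m i1 i1 - m i0 i0 = 0 by apply: z; fe EC constr:(i0) constr:(i1).
have m01 : m i0 i1 + m i1 i0 = 0 by apply: z; fe EC constr:(i0) constr:(i0).
have a11 : m i1 i1 = m i0 i0 by lra.
have a01 : m i0 i1 = - m i1 i0 by lra.
clear m11 m01.
have [O D] := Sm.
have EO := fun i j => congr1 (fun M : 'M[R]_3 => M i j) O.
have e22 := EO i2 i2; have e00 := EO i0 i0; clear EO.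
move: e22 e00 D; rewrite det3E /det3; mxs; rewrite m12 m02 m21 m20 a11 a01 => e22 e00 D.
clear O.
have m22 : m i2 i2 = 1.
  have : m i2 i2 * (m i0 i0 * m i0 i0 + m i1 i0 * m i1 i0) = 1 by rewrite -D; ring.
  have -> : m i0 i0 * m i0 i0 + m i1 i0 * m i1 i0 = 1 by lra.
  by rewrite mulr1.
have f1 : m i1 i0 * q1 = 0.
  apply: (from_eq (k := - 2^-1) _ (E1 i0 i0)); rewrite /bmx /mx3; mxs; rewrite ?m02 ?m20 ?a01; by field.
have f2 : m i1 i0 * (r1 - p1) = 0.
  first [ apply: (from_eq (k := 1) _ (E1 i0 i1)); rewrite /bmx /mx3; mxs; rewrite ?m02 ?m20 ?m21 ?a01 ?a11; ring
        | apply: (from_eq (k := -1) _ (E1 i0 i1)); rewrite /bmx /mx3; mxs; rewrite ?m02 ?m20 ?m21 ?a01 ?a11; ring ].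
have f4 : m i1 i0 * (r2 - p2) = 0.
  first [ apply: (from_eq (k := 1) _ (E2 i0 i1)); rewrite /bmx /mx3; mxs; rewrite ?m02 ?m20 ?m21 ?a01 ?a11; ring
        | apply: (from_eq (k := -1) _ (E2 i0 i1)); rewrite /bmx /mx3; mxs; rewrite ?m02 ?m20 ?m21 ?a01 ?a11; ring ].
have m10 : m i1 i0 = 0.
  apply: z; apply: (lc2' (k1 := - q2) (k2 := q1) f2 f4); rewrite /kap; ring.
have e0 : m i0 i0 ^+ 2 = 1 by rewrite expr2; move: e00; rewrite m10; lra.
have Em : m = diag3 (m i0 i0) (m i0 i0) 1.
  apply: mx3_ext; rewrite /diag3 /mx3; mxs; rewrite ?m12 ?m02 ?m21 ?m20 ?a11 ?a01 ?m10 ?m22 //; ring.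
rewrite Em; case: (pm1 e0) => ->; [left | right]; apply: mx3_ext; rewrite /diag3 /Rzpi /mx3; mxs; ring.
Qed.

Lemma Z2_degenerate n (b : 'I_n -> 'M[R]_3) : (forall k, (b k)^T = b k) ->
  (forall k, blk (b k)) -> (forall i j, b i *m b j = b j *m b i) ->
  exists m, [/\ SO3 m, ~ Z2grp m & forall k, act2 m (b k) = b k].
Proof.
move=> sb bb cm.
have [[l Hl]|Hall] := classic (exists l, b l i0 i1 <> 0 \/ b l i0 i0 <> b l i1 i1); last first.
  exists (Rz90 R); split; [exact: Rz90_so3 | exact: not_Z2_Rz90 |] => k.
  apply: Rz90_fix_blk => //; apply: NNPP => h; apply: Hall; exists k; by [left | right].
have [h1 h2] := bb l.
have [cc [s [cs [x [y [z Hd]]]]]] := plane (sb l) h1 h2.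
have Sz := Rz_so3 cs.
have xy : x != y.
  apply/eqP => exy.
  have bl : b l = diag3 y y z.
    rewrite -(conjK' (b l) Sz) Hd exy; exact: (Rz_fix _ _ cs).
  by case: Hl; rewrite bl /diag3 /mx3; mxs.
exists (Rz cc s *m Rxpi R *m (Rz cc s)^T); split.
- by apply: so3M; [apply: so3M => //; apply: Rxpi_so3 | apply: so3T].
- exact: not_Z2_RxR.
move=> k; set e := (Rz cc s)^T *m b k *m Rz cc s.
have se : e^T = e by rewrite /e conjT' sb.
have [be1 be2] : blk e by apply: Rz_blk.
have ce : e *m diag3 x y z = diag3 x y z *m e by rewrite -Hd /e !conjMT // cm.
have eE : (Rz cc s)^T *m b k *m Rz cc s = e by [].
clearbody e.
have e01 : e i0 i1 = 0.
  have := comm0 ce i0 i1; rewrite /diag3 /mx3; mxs => h.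
  have ne : y - x != 0 by rewrite subr_eq0 eq_sym.
  have : e i0 i1 * (y - x) = 0.
    first [ apply: (from_eq (k := 1) _ h); ring | apply: (from_eq (k := -1) _ h); ring ].
  by move/eqP; rewrite mulf_eq0 (negPf ne) orbF => /eqP.
have [s1 s2 s3] := symE se.
apply: (RxR_fix (x := e i0 i0) (y := e i1 i1) (z := e i2 i2) (d := b k) cs).
rewrite eE; apply: mx3_ext; rewrite /diag3 /mx3; mxs; rewrite ?s1 ?s2 ?s3 ?be1 ?be2 ?e01 //.
Qed.

Lemma omega_blk d1 d2 : d1^T = d1 -> d2^T = d2 -> blk d1 -> blk d2 ->
  tr3 (cross22 d1 d2) i0 = 0 /\ tr3 (cross22 d1 d2) i1 = 0.
Proof.
move=> s1 s2 b1 b2; rewrite (blk_form s1 b1) (blk_form s2 b2).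
by split; rewrite /tr3 sum3E; cs; rewrite /bmx /mx3; mxs; field.
Qed.

Lemma eig_blk d (w : vec R) : d^T = d -> blk d -> w i0 = 0 -> w i1 = 0 ->
  crossv (matvec d w) w = zerov R.
Proof.
move=> sd bd w0 w1; rewrite (blk_form sd bd).
apply: vec_ext; rewrite /bmx /mx3; vs; rewrite w0 w1; ring.
Qed.

Lemma lagr3 (v w : vec R) : crossv v w = zerov R ->
  forall i, dotv w w * v i = dotv v w * w i.
Proof.
move=> H i; apply/eqP; rewrite -subr_eq0; apply/eqP.
have -> : dotv w w * v i - dotv v w * w i = crossv w (crossv v w) i.
  by case: (ord3 i) => ->; vs; ring.
by rewrite H; case: (ord3 i) => ->; vs; ring.
Qed.

Lemma dot_pos (w : vec R) : w <> zerov R -> 0 < dotv w w.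
Proof.
move=> wn; rewrite /dotv sum3E.
have h0 := sqr_ge0 (w i0); have h1 := sqr_ge0 (w i1); have h2 := sqr_ge0 (w i2).
rewrite !expr2 in h0 h1 h2.
rewrite lt_def; apply/andP; split; last by lra.
apply/eqP => s0; apply: wn; apply: vec_ext; rewrite /zerov.
- by apply/eqP; rewrite -sqrf_eq0 expr2; apply/eqP; lra.
- by apply/eqP; rewrite -sqrf_eq0 expr2; apply/eqP; lra.
- by apply/eqP; rewrite -sqrf_eq0 expr2; apply/eqP; lra.
Qed.
End I.

Section G.
Variable R : realType.
Variable n : nat.
Implicit Types (c d g m : 'M[R]_3).

Ltac mxs := rewrite ?(mxE, sum3E) /=.

Lemma conjfT g (a : 'I_n -> 'M[R]_3) k : conjf g^T a k = g^T *m a k *m g.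
Proof. by rewrite /conjf trmxK. Qed.

Lemma cond_back (P : ('I_n -> 'M[R]_3) -> Prop) g (a : 'I_n -> 'M[R]_3) : SO3 g ->
  (P (conjf g (conjf g^T a)) <-> P (conjf g^T a)) -> P (conjf g^T a) -> P a.
Proof. by move=> Sg E H; rewrite -(conjfK a Sg); apply/E. Qed.

Lemma part1 (a : 'I_n -> 'M[R]_3) (hsym : forall k, (a k)^T = a k) :
  isotropic a <-> Cond1 a.
Proof.
split.
  move/class_to => [g [Sg HH]]; set b := conjf g^T a.
  have sb : forall k, (b k)^T = b k by apply: conjf_sym.
  apply: (cond_back (P := @Cond1 R n) Sg); first exact: cond1_rot.
  move=> k; apply: fix_scal => //.
  - by have [_ ->] := (proj2 (HH (Rz90 R))) (Rz90_so3 R).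
  - by have [_ ->] := (proj2 (HH (Rx90 R))) (Rx90_so3 R).
move=> H; apply: (class_of (g := 1%:M) (so3_1 R)) => m.
have E : forall k, conjf 1%:M^T a k = a k by move=> k; rewrite conjfT trmx1 mul1mx mulmx1.
split; first by case.
by move=> Sm; split => // k; rewrite E; apply: scal_fix.
Qed.

Lemma part2 (a : 'I_n -> 'M[R]_3) (hsym : forall k, (a k)^T = a k) :
  transv_isotropic a <-> Cond2 a.
Proof.
split.
  move/class_to => [g [Sg HH]]; set b := conjf g^T a.
  have sb : forall k, (b k)^T = b k by apply: conjf_sym.
  apply: (cond_back (P := @Cond2 R n) Sg); first exact: cond2_rot.
  rewrite /Cond2 -/b.
  have fixz : forall k, act2 (Rz90 R) (b k) = b k.
    by move=> k; have [_ ->] := (proj2 (HH (Rz90 R))) (O2_Rz90 R).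
  have TIb := fun k => fixRz90_TI (sb k) (fixz k).
  have [[j Hj]|Hall] := classic (exists j, b j i0 i0 <> b j i2 i2).
    exists j; rewrite (TIb j); split.
      by move/dev_diag3 => [_ ?].
    split; first by rewrite diag3M cross_diag /Dd; ring.
    by move=> k; rewrite (TIb k) cross_diag /Dd; ring.
  exfalso; apply: (not_O2_Rx90 (R := R)); apply/HH; split; first exact: (Rx90_so3 R).
  move=> k; apply: scal_fix; last exact: (Rx90_so3 R).
  rewrite -/b (TIb k); have -> : b k i2 i2 = b k i0 i0.
    by apply: NNPP => H; apply: Hall; exists k => H'; apply: H; rewrite H'.
  exact: dev_diag3_0.
move=> [j [dj [cj ck]]].
have [g [al [be [Sg ne Hj]]]] := uni (hsym j) dj cj.
set b := conjf g^T a.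
have sb : forall k, (b k)^T = b k by apply: conjf_sym.
have bj : b j = diag3 al al be by rewrite /b conjfT.
have TIb : forall k, b k = diag3 (b k i0 i0) (b k i0 i0) (b k i2 i2).
  move=> k; apply: (TI_cross ne (sb k)).
  by rewrite -bj /b !conjfT cross_rotT.
apply: (class_of Sg) => m; split.
  move=> [Sm Hm]; apply: (O2_char Sm _ ne).
  by rewrite -bj; apply: fix_comm => //; apply: Hm.
move=> Om; have [Sm Fm] := O2_fix Om; split => // k.
by rewrite -/b (TIb k); apply: Fm.
Qed.

Lemma D2_Rxpi : D2grp (Rxpi R). Proof. by right; left. Qed.
Lemma D2_Rypi : D2grp (Rypi R). Proof. by right; right; left. Qed.

Lemma comm_conj g (a b : 'M[R]_3) : SO3 g -> a *m b = b *m a ->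
  (g^T *m a *m g) *m (g^T *m b *m g) = (g^T *m b *m g) *m (g^T *m a *m g).
Proof. by move=> Sg H; rewrite !conjMT // H. Qed.

Lemma comm2 (A B C : 'M[R]_3) : A *m B = B *m A -> A *m C = C *m A -> A *m (B *m C) = (B *m C) *m A.
Proof. by move=> h1 h2; rewrite mulmxA h1 -mulmxA h2 mulmxA. Qed.

Lemma part3 (a : 'I_n -> 'M[R]_3) (hsym : forall k, (a k)^T = a k) :
  orthotropic a <-> Cond3 a.
Proof.
split.
  move/class_to => [g [Sg HH]]; set b := conjf g^T a.
  have sb : forall k, (b k)^T = b k by apply: conjf_sym.
  apply: (cond_back (P := @Cond3 R n) Sg); first exact: cond3_rot.
  rewrite /Cond3 -/b.
  have fx : forall k, act2 (Rxpi R) (b k) = b k.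
    by move=> k; have [_ ->] := (proj2 (HH (Rxpi R))) D2_Rxpi.
  have fy : forall k, act2 (Rypi R) (b k) = b k.
    by move=> k; have [_ ->] := (proj2 (HH (Rypi R))) D2_Rypi.
  have Db := fun k => fix_D2_diag (sb k) (fx k) (fy k).
  split.
    move=> k l; apply/(tr3_zero_comm (sb k) (sb l)).
    by rewrite (Db k) (Db l) !diag3M [_ * b l i0 i0]mulrC [_ * b l i1 i1]mulrC [_ * b l i2 i2]mulrC.
  apply: NNPP => Hn.
  have cjj : forall j, cross22 (b j) (b j *m b j) = zero3 R.
    by move=> j; apply: NNPP => h; apply: Hn; left; exists j.
  have cij : forall i j, cross22 (b i) (b j) = zero3 R.
    by move=> i j; apply: NNPP => h; apply: Hn; right; exists i, j.
  have [m [Sm nD Fm]] := D2_degenerate Db cjj cij.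
  by apply: nD; apply/HH.
move=> [Htr Hor].
have comm : forall k l, a k *m a l = a l *m a k.
  by move=> k l; apply/(tr3_zero_comm (hsym k) (hsym l)).
have caseA : forall j, cross22 (a j) (a j *m a j) <> zero3 R -> conj_class (sym_group a) (@D2grp R).
  move=> j Hj.
  have [g [x [y [z [Sg Hd]]]]] := diagonalize (hsym j).
  set b := conjf g^T a.
  have bE : forall k, b k = g^T *m a k *m g by move=> k; rewrite /b conjfT.
  have bj : b j = diag3 x y z by rewrite bE.
  have D0 : Dd x y z (x * x) (y * y) (z * z) != 0.
    apply/eqP => h; apply: Hj; rewrite -(cross_rotT _ _ Sg) -conjMT // Hd diag3M.
    exact/cross_diag.
  apply: (class_of Sg); rewrite -/b.
  apply: (fin3 (X := b j) (Y := b j *m b j) bj _ D0).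
  - by rewrite bj diag3M.
  - move=> k; have h : b k *m b j = b j *m b k by rewrite !bE; apply: comm_conj => //; apply: comm.
    by split => //; apply: comm2.
  - move=> m Sm Fm; have h := fix_comm Sm (Fm j).
    by split => //; apply: comm2.
case: Hor => [[j Hj]|[i [j Hij]]]; first exact: caseA Hj.
have [cii|cii] := classic (cross22 (a i) (a i *m a i) = zero3 R); last exact: caseA cii.
have di : dev (a i) <> 0 by move=> d0; apply: Hij; exact: cross_scal.
have [g1 [al [be [S1 ne Hi]]]] := uni (hsym i) di cii.
set b' := g1^T *m a j *m g1.
have cb : b' *m diag3 al al be = diag3 al al be *m b' by rewrite -Hi /b'; apply: comm_conj => //; apply: comm.
have [h02 h12] := comm_block cb ne.
have sb' : b'^T = b' by rewrite /b' conjT' hsym.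
have [cc [s [cs [y0 [y1 [y2 Hy]]]]]] := plane sb' h02 h12.
have Sz := Rz_so3 cs.
set g := g1 *m Rz cc s.
have Sg : SO3 g by apply: so3M.
set b := conjf g^T a.
have bE : forall k, b k = g^T *m a k *m g by move=> k; rewrite /b conjfT.
have bi : b i = diag3 al al be by rewrite bE /g conj_comp Hi RzT_fix.
have bj : b j = diag3 y0 y1 y2 by rewrite bE /g conj_comp -/b' Hy.
have D0 : Dd al al be y0 y1 y2 != 0.
  apply/eqP => h; apply: Hij; rewrite -(cross_rotT _ _ Sg) -(bE i) -(bE j) bi bj.
  exact/cross_diag.
apply: (class_of Sg); rewrite -/b.
apply: (fin3 bi bj D0).
- by move=> k; rewrite !bE; split; apply: comm_conj => //; apply: comm.
- move=> m Sm Fm; split; exact: fix_comm.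
Qed.

Lemma Z2_Rzpi : Z2grp (Rzpi R). Proof. by right. Qed.

Lemma part4 (a : 'I_n -> 'M[R]_3) (hsym : forall k, (a k)^T = a k) :
  monoclinic a <-> Cond4 a.
Proof.
split.
  move/class_to => [g [Sg HH]]; set b := conjf g^T a.
  have sb : forall k, (b k)^T = b k by apply: conjf_sym.
  apply: (cond_back (P := @Cond4 R n) Sg); first by apply: cond4_rot.
  rewrite /Cond4 -/b.
  have fz : forall k, act2 (Rzpi R) (b k) = b k.
    by move=> k; have [_ ->] := (proj2 (HH (Rzpi R))) Z2_Rzpi.
  have bb := fun k => fix_Rzpi_block (sb k) (fz k).
  have [[i [j Hij]]|Hall] := classic (exists i j, b i *m b j <> b j *m b i); last first.
    exfalso.
    have cm : forall i j, b i *m b j = b j *m b i.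
      by move=> i j; apply: NNPP => h; apply: Hall; exists i, j.
    have [m [Sm nZ Fm]] := Z2_degenerate sb bb cm.
    by apply: nZ; apply/HH.
  exists i, j => /=; split.
    by move/(tr3_zero_comm (sb i) (sb j)).
  have [w0 w1] := omega_blk (sb i) (sb j) (bb i) (bb j).
  by move=> k; apply: eig_blk.
move=> [i [j /= [wn Hw]]].
set w := tr3 (cross22 (a i) (a j)) in wn Hw.
have sp := dot_pos wn.
set r := Num.sqrt (dotv w w).
have r0 : 0 < r by rewrite sqrtr_gt0.
have rn : r != 0 by apply: lt0r_neq0.
have r2 : r ^+ 2 = dotv w w by rewrite sqr_sqrtr // ltW.
set u := fun t => r^-1 * w t.
have uu : dotv u u = 1.
  have -> : dotv u u = dotv w w / r ^+ 2 by rewrite /u /dotv !sum3E; field.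
  by rewrite r2 divff // lt0r_neq0.
have [g [Sg Hg]] := rot_to_e3 uu.
set b := conjf g^T a.
have bE : forall k, b k = g^T *m a k *m g by move=> k; rewrite /b conjfT.
have bb : forall k, (b k)^T = b k /\ blk (b k).
  move=> k; set l := dotv (matvec (a k) w) w / dotv w w.
  have Hl : matvec (a k) (matvec g (v3 0 0 1)) = (fun t => l * matvec g (v3 0 0 1) t).
    rewrite Hg /u matvec_scale; apply: functional_extensionality => t.
    have e := @lagr3 R _ _ (Hw k) t.
    have nz : dotv w w != 0 by apply: lt0r_neq0.
    have e' : matvec (a k) w t = l * w t.
      by rewrite /l -[LHS](mulKf nz) e; field.
    by rewrite e'; ring.
  have [h1 h2 h3 _] := eig_block Sg (hsym k) Hl.
  by rewrite bE; split => //; split.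
have ncomm : a i *m a j <> a j *m a i.
  by move=> h; apply: wn; apply/(tr3_zero_comm (hsym i) (hsym j)).
have aE : forall k, a k = g *m b k *m g^T by move=> k; rewrite bE conjK'.
have bn : b i *m b j <> b j *m b i.
  by move=> h; apply: ncomm; rewrite (aE i) (aE j) conjM // conjM // h.
apply: (class_of Sg); rewrite -/b => m; split.
  move=> [Sm Fm]; have [si bi] := bb i; have [sj bj] := bb j.
  have c1 := fix_comm Sm (Fm i); have c2 := fix_comm Sm (Fm j).
  rewrite (blk_form si bi) in c1; rewrite (blk_form sj bj) in c2.
  apply: (Z2_char Sm c1 c2); apply: kap_comm.
  move=> h; apply: bn; rewrite (blk_form si bi) (blk_form sj bj); exact: h.
move=> Zm; have [Sm F] := Z2_fix Zm; split => // k.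
by have [sk bk] := bb k; apply: F.
Qed.

Theorem main (a : 'I_n -> 'M[R]_3) (hsym : forall k, (a k)^T = a k) :
  (isotropic a <-> Cond1 a) /\ (transv_isotropic a <-> Cond2 a) /\
  (orthotropic a <-> Cond3 a) /\ (monoclinic a <-> Cond4 a).
Proof.
split; first exact: part1.
split; first exact: part2.
split; first exact: part3.
exact: part4.
Qed.
End G.


Theorem theorem8p6 (R : realType) (n : nat) (a : 'I_n -> 'M[R]_3)
  (hsym : forall k, (a k)^T = a k) :
  (isotropic a <-> (forall k, dev (a k) = 0))
  /\ (transv_isotropic a <->
        exists j, dev (a j) <> 0 /\ cross22 (a j) (a j *m a j) = zero3 R
                  /\ (forall k, cross22 (a j) (a k) = zero3 R))
  /\ (orthotropic a <->
        (forall k l, tr3 (cross22 (a k) (a l)) = zerov R)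
        /\ ((exists j, cross22 (a j) (a j *m a j) <> zero3 R)
            \/ (exists i j, cross22 (a i) (a j) <> zero3 R)))
  /\ (monoclinic a <->
        exists i j, let w := tr3 (cross22 (a i) (a j)) in
          w <> zerov R /\ (forall k, crossv (matvec (a k) w) w = zerov R)).
Proof. exact: (@main R n a hsym). Qed.
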